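(* Let $C$ be a cycle and $T$ a shortcut tree for $C$ with respect to a length-function $\ell$ on $T\cup C$, and assume $V(C)=L(T)$, $|L(T)|\ge 3$, and $T$ has no vertex of degree $2$. Then $T\cup C$ is planar and $3$-regular.
   Context: Graphs are finite, parallel edges allowed, no loops. A length-function is a map $\ell:E\to\mathbb{R}^+$ (strictly positive reals); $\ell(H)=\sum_{e\in E(H)}\ell(e)$. $\mathrm{sd}_G(A)$ is the minimum of $\ell(S)$ over connected subgraphs $S\subseteq G$ with $A\subseteq V(S)$. $L(T)$ is the set of leaves of $T$. Shortcut tree: let $H$ be a graph, $T$ a tree, both subgraphs of $T\cup H$, and $\ell$ a length-function on $T\cup H$. Then $T$ is a shortcut tree for $H$ if (SCT1) $V(T)\cap V(H)=L(T)$; (SCT2) $E(T)\cap E(H)=\emptyset$; (SCT3) $\ell(T)<\mathrm{sd}_H(L(T))$; (SCT4) for every proper subset $B\subsetneq L(T)$, $\mathrm{sd}_H(B)\le\mathrm{sd}_T(B)$. *)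

(* Defs.v *)
From Stdlib Require Import Reals.
From mathcomp Require Import all_boot.

Set Implicit Arguments.
Unset Strict Implicit.
Unset Printing Implicit Defensive.

(* A finite multigraph: vertex type V, edge type E, each edge e has the
   (ordered, but only used up to orientation) pair of endpoints [ends e].
   Parallel edges are allowed; loops are excluded by a hypothesis in the
   theorem. *)
Section Graphs.
Variables (V E : finType) (ends : E -> V * V).

Definition joins (e : E) (u v : V) : bool :=
  (ends e == (u, v)) || (ends e == (v, u)).

Definition incident (e : E) (v : V) : bool :=
  ((ends e).1 == v) || ((ends e).2 == v).

Definition is_subgraph (VS : {set V}) (ES : {set E}) : Prop :=
  forall e, e \in ES -> ((ends e).1 \in VS) && ((ends e).2 \in VS).

(* degree of v in the subgraph with edge set ES (no loops, so each
   incident edge contributes 1) *)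
Definition deg (ES : {set E}) (v : V) : nat :=
  #|[set e in ES | incident e v]|.

Definition adj (ES : {set E}) : rel V :=
  fun u v => [exists e in ES, joins e u v].

Definition connected (VS : {set V}) (ES : {set E}) : Prop :=
  forall u v, u \in VS -> v \in VS -> connect (adj ES) u v.

(* (VS, ES) is a cycle x_0 e_0 x_1 e_1 ... x_{k-1} e_{k-1} x_0 with
   distinct vertices and distinct edges, k >= 2 (k = 2 is a pair of
   parallel edges, as parallel edges are allowed). *)
Definition is_cycle (VS : {set V}) (ES : {set E}) : Prop :=
  exists (k : nat) (f : 'I_k -> V) (g : 'I_k -> E),
    [/\ 2 <= k, injective f, injective g
      & forall i, joins (g i) (f i) (f (ordS i))] /\
    VS = [set f i | i : 'I_k] /\ ES = [set g i | i : 'I_k].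

Definition acyclic (VS : {set V}) (ES : {set E}) : Prop :=
  forall (VS' : {set V}) (ES' : {set E}), VS' \subset VS -> ES' \subset ES -> ~ is_cycle VS' ES'.

Definition is_tree (VS : {set V}) (ES : {set E}) : Prop :=
  [/\ is_subgraph VS ES, VS != set0, connected VS ES & acyclic VS ES].

Definition leaves (VS : {set V}) (ES : {set E}) : {set V} :=
  [set v in VS | deg ES v == 1].

Variable l : E -> R.

Definition len (ES : {set E}) : R := \big[Rplus/R0]_(e in ES) l e.

Definition conn_sub_cont (VH : {set V}) (EH : {set E}) (A : {set V})
    (VS : {set V}) (ES : {set E}) : Prop :=
  [/\ VS \subset VH, ES \subset EH, is_subgraph VS ES, connected VS ES
    & A \subset VS].

(* x < sd_H(A)   (with sd_H(A) = +infinity if no such S exists; the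
   minimum is over a finite set, so it is attained) *)
Definition sd_gt (VH : {set V}) (EH : {set E}) (A : {set V}) (x : R) : Prop :=
  forall (VS : {set V}) (ES : {set E}), conn_sub_cont VH EH A VS ES -> Rlt x (len ES).

(* sd_{H1}(A) <= sd_{H2}(A)  (minima over finite sets, +infinity if empty) *)
Definition sd_le (VH1 : {set V}) (EH1 : {set E}) (VH2 : {set V})
    (EH2 : {set E}) (A : {set V}) : Prop :=
  forall (VS2 : {set V}) (ES2 : {set E}), conn_sub_cont VH2 EH2 A VS2 ES2 ->
    exists (VS1 : {set V}) (ES1 : {set E}), conn_sub_cont VH1 EH1 A VS1 ES1 /\ Rle (len ES1) (len ES2).

Definition shortcut_tree (VT : {set V}) (ET : {set E})
    (VH : {set V}) (EH : {set E}) : Prop :=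
  [/\ VT :&: VH = leaves VT ET,
      ET :&: EH = set0,
      sd_gt VH EH (leaves VT ET) (len ET)
    & forall B : {set V}, B \proper leaves VT ET -> sd_le VH EH VT ET B].

(* Planarity of the whole multigraph (V, E, ends): an embedding in R^2
   with vertices as distinct points and edges as arcs (continuous
   injective images of [0,1]) joining their endpoints, whose interiors
   are pairwise disjoint and avoid all vertices and other arcs. *)
Definition cont01 (g : R -> R * R) : Prop :=
  forall t, Rle R0 t -> Rle t R1 -> forall eps, Rlt R0 eps ->
    exists d, Rlt R0 d /\ forall s, Rle R0 s -> Rle s R1 ->
      Rlt (Rabs (Rminus s t)) d ->
      Rlt (Rabs (Rminus (fst (g s)) (fst (g t)))) eps /\
      Rlt (Rabs (Rminus (snd (g s)) (snd (g t)))) eps.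

Definition planar : Prop :=
  exists (pos : V -> R * R) (arc : E -> R -> R * R),
    [/\ injective pos,
        (forall e, [/\ cont01 (arc e), arc e R0 = pos (ends e).1
                     & arc e R1 = pos (ends e).2]),
        (forall e e' t t', Rlt R0 t -> Rlt t R1 -> Rle R0 t' -> Rle t' R1 ->
            arc e t = arc e' t' -> e = e' /\ t = t')
      & (forall e v t, Rlt R0 t -> Rlt t R1 -> arc e t <> pos v)].

End Graphs.

(* Main.v *)
Require Import Defs.
From Stdlib Require Import Reals.
From mathcomp Require Import all_boot.
From HB Require Import structures.
From Stdlib Require Import Lia Lra.
From mathcomp Require Import zify.

Set Implicit Arguments.
Unset Strict Implicit.
Unset Printing Implicit Defensive.

Section Basics.
Variables (V E : finType) (ends : E -> V * V).
Hypothesis noloop : forall e, (ends e).1 <> (ends e).2.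

Lemma joinsC e u v : joins ends e u v = joins ends e v u.
Proof. by rewrite /joins orbC. Qed.

Lemma joins_neq e u v : joins ends e u v -> u != v.
Proof.
move=> J; apply/eqP => Huv; subst v; move: J.
rewrite /joins orbb => /eqP He; by have := @noloop e; rewrite He.
Qed.

Lemma joins_inc e u v : joins ends e u v -> incident ends e u && incident ends e v.
Proof. by rewrite /joins /incident => /orP[] /eqP ->; rewrite /= !eqxx ?orbT. Qed.

Lemma inc_joins e u : incident ends e u -> exists w, joins ends e u w.
Proof.
rewrite /incident /joins; case: (ends e) => a b /= /orP[] /eqP ->.
- by exists b; rewrite eqxx.
- by exists a; rewrite eqxx orbT.
Qed.

Lemma joins_ends e u v : joins ends e u v ->
  ((ends e).1 == u) && ((ends e).2 == v) || ((ends e).1 == v) && ((ends e).2 == u).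
Proof. by rewrite /joins; case: (ends e) => a b /= /orP[] /eqP [-> ->]; rewrite !eqxx ?orbT. Qed.

Lemma joins_other e u v w : joins ends e u v -> joins ends e u w -> v = w.
Proof.
rewrite /joins; case: (ends e) => a b /=.
by move=> /orP[] /eqP [<- <-] /orP[] /eqP [] // => [Ha Hb|Ha Hb]; subst;
  first [by [] | exfalso; apply: (@noloop e); rewrite ?Ha ?Hb ].
Qed.

Lemma adj_sym (F : {set E}) : symmetric (adj ends F).
Proof.
move=> u v; rewrite /adj; apply/existsP/existsP => [] [e He]; exists e;
  by rewrite joinsC.
Qed.

Lemma adj_sub (F G : {set E}) : F \subset G -> subrel (adj ends F) (adj ends G).
Proof.
move=> FG u v /existsP [e /andP [eF J]]; apply/existsP; exists e.
by rewrite J (subsetP FG).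
Qed.

Lemma conn_subset (F G : {set E}) x y : F \subset G ->
  connect (adj ends F) x y -> connect (adj ends G) x y.
Proof. move=> FG; apply: connect_sub => u v H; apply: connect1; exact: adj_sub H. Qed.

Lemma connect_symm (F : {set E}) x y :
  connect (adj ends F) x y = connect (adj ends F) y x.
Proof. by apply: sym_connect_sym; apply: adj_sym. Qed.

End Basics.

Lemma order3 (a b c : nat) : a <> b -> a <> c -> b <> c ->
  (a < b /\ b < c) \/ (a < c /\ c < b) \/ (b < a /\ a < c) \/
  (b < c /\ c < a) \/ (c < a /\ a < b) \/ (c < b /\ b < a).
Proof. move=> *; lia. Qed.


Lemma Rplus_assoc' : associative Rplus. Proof. by move=> *; rewrite Rplus_assoc. Qed.
HB.instance Definition _ := Monoid.isComLaw.Build R R0 Rplus Rplus_assoc' Rplus_comm Rplus_0_l.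

Section Len.
Variables (E : finType) (l : E -> R).
Hypothesis lpos : forall e, Rle R0 (l e).

Definition ind (X : {set E}) e := if e \in X then l e else R0.

Lemma lenE X : len l X = \big[Rplus/R0]_e ind X e.
Proof. by rewrite /len big_mkcond. Qed.

Lemma sum_le (F G : E -> R) : (forall e, Rle (F e) (G e)) ->
  Rle (\big[Rplus/R0]_e F e) (\big[Rplus/R0]_e G e).
Proof.
move=> H; apply: (big_ind2 (fun a b => Rle a b)); first exact: Rle_refl.
  by move=> *; apply: Rplus_le_compat.
by move=> e _; apply: H.
Qed.

Lemma lenU (X Y : {set E}) : Rle (len l (X :|: Y)) (Rplus (len l X) (len l Y)).
Proof.
rewrite !lenE -big_split /=; apply: sum_le => e; rewrite /ind inE.
have := lpos e.
case: (e \in X); case: (e \in Y) => /= H; lra.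
Qed.

Lemma len_disj (X Y Z : {set E}) : [disjoint X & Y] -> X \subset Z -> Y \subset Z ->
  Rle (Rplus (len l X) (len l Y)) (len l Z).
Proof.
move=> dXY sXZ sYZ; rewrite !lenE -big_split /=; apply: sum_le => e; rewrite /ind.
have := lpos e.
case: (boolP (e \in X)) => eX; case: (boolP (e \in Y)) => eY H.
- by move: dXY; rewrite disjoints_subset => /subsetP /(_ e eX); rewrite inE eY.
- rewrite (subsetP sXZ e eX); lra.
- rewrite (subsetP sYZ e eY); lra.
- case: (e \in Z); lra.
Qed.
End Len.

Open Scope R_scope.
Lemma bound1 (q c s t : R) : 0 <= s -> s <= 1 -> 0 <= t -> t <= 1 ->
  Rabs ((q*s + c*(s*(1-s))) - (q*t + c*(t*(1-t)))) <= (Rabs q + Rabs c) * Rabs (s - t).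
Proof.
move=> s0 s1 t0 t1.
have -> : (q*s + c*(s*(1-s))) - (q*t + c*(t*(1-t))) = (s - t) * (q + c * (1 - s - t)) by ring.
rewrite Rabs_mult Rmult_comm; apply: Rmult_le_compat_r; first exact: Rabs_pos.
apply: Rle_trans (Rabs_triang _ _) _; apply: Rplus_le_compat_l.
rewrite Rabs_mult; rewrite -{2}(Rmult_1_r (Rabs c)); apply: Rmult_le_compat_l.
  exact: Rabs_pos.
apply: Rabs_le; lra.
Qed.

Lemma cont_quad (g : R -> R * R) (p1 q1 c1 p2 q2 c2 : R) :
  (forall s, g s = (p1 + q1*s + c1*(s*(1-s)), p2 + q2*s + c2*(s*(1-s)))) ->
  cont01 g.
Proof.
move=> Hg t t0 t1 eps He.
set M := Rabs q1 + Rabs c1 + Rabs q2 + Rabs c2 + 1.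
have HM : 0 < M.
  have := Rabs_pos q1; have := Rabs_pos c1; have := Rabs_pos q2; have := Rabs_pos c2.
  rewrite /M; lra.
exists (eps / M); split; first by apply: Rdiv_lt_0_compat.
move=> s s0 s1 Hst; rewrite !Hg /=.
have Hd : Rabs (s - t) * M < eps.
  have := Rmult_lt_compat_r M _ _ HM Hst.
  by rewrite /Rdiv Rmult_assoc Rinv_l ?Rmult_1_r //; apply: Rgt_not_eq.
have Hp := Rabs_pos (s - t).
have A1 := bound1 q1 c1 s0 s1 t0 t1.
have A2 := bound1 q2 c2 s0 s1 t0 t1.
have B1 : forall p q c, p + q*s + c*(s*(1-s)) - (p + q*t + c*(t*(1-t))) =
  (q*s + c*(s*(1-s))) - (q*t + c*(t*(1-t))) by move=> *; ring.
rewrite !B1.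
have := Rabs_pos q1; have := Rabs_pos c1; have := Rabs_pos q2; have := Rabs_pos c2.
rewrite /M in Hd.
split; nra.
Qed.
Close Scope R_scope.

Open Scope R_scope.
Lemma RL_sib (aP bP a1 b1 a2 b2 s s' : R) : aP <= a1 -> a1 <= b1 -> b1 < a2 ->
  a2 <= b2 -> b2 <= bP -> 0 < s -> s < 1 -> 0 < s' -> s' < 1 ->
  (1-s)*aP + s*a1 = (1-s')*aP + s'*a2 -> (1-s)*bP + s*b1 = (1-s')*bP + s'*b2 -> False.
Proof.
move=> h1 h2 h3 h4 h5 s0 s1 t0 t1 E1 E2.
have F1 : s' * (a2 - aP) = s * (a1 - aP) by lra.
have F2 : s * (bP - b1) = s' * (bP - b2) by lra.
have G1 : s' < s.
  have : s' * (a2 - aP) < s * (a2 - aP) by nra.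
  move=> H; apply: (Rmult_lt_reg_r (a2 - aP)); lra.
have G2 : s <= s'.
  have : s * (bP - b1) <= s' * (bP - b1) by nra.
  move=> H; apply: (Rmult_le_reg_r (bP - b1)); lra.
lra.
Qed.

Lemma RL_end1 (x y s : R) : s < 1 -> (1-s)*x + s*y = y -> x = y.
Proof. move=> s1 E; have : (1 - s) * (x - y) = 0 by lra.
case/Rmult_integral => H; lra. Qed.

Lemma RL_end0 (x y s : R) : 0 < s -> (1-s)*x + s*y = x -> x = y.
Proof. move=> s1 E; have : s * (y - x) = 0 by lra.
case/Rmult_integral => H; lra. Qed.

Lemma RL_betw (x y s : R) : x <= y -> 0 <= s -> s <= 1 ->
  x <= (1-s)*x + s*y <= y.
Proof. move=> *; split; nra. Qed.
Close Scope R_scope.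

Open Scope R_scope.
Lemma INR_betw_int (i k : nat) : INR i < INR k -> INR k < INR i + 1 -> False.
Proof.
move=> h1 h2; have := INR_lt _ _ h1; rewrite -S_INR in h2; have := INR_lt _ _ h2.
lia.
Qed.

Lemma INR_leN (a b : nat) : INR a <= INR b -> (a <= b)%N.
Proof. by move=> H; apply/leP; apply: INR_le. Qed.

Lemma INR_eqN (a b : nat) : INR a = INR b -> a = b.
Proof. exact: INR_eq. Qed.

Lemma leN_INR (a b : nat) : (a <= b)%N -> INR a <= INR b.
Proof. by move=> /leP; apply: le_INR. Qed.

Lemma INR_gt_pred (m b : nat) : INR m - 1 < INR b -> (m <= b)%N.
Proof.
move=> H; rewrite leqNgt; apply/negP => /leN_INR; rewrite S_INR => H'; lra.
Qed.

Lemma s01 s t : (s = t \/ s = 1 - t) -> 0 < t -> t < 1 -> 0 < s /\ s < 1.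
Proof. by case=> -> *; lra. Qed.
Lemma RL_betw2 (x y s : R) : x <= y -> 0 <= s -> s <= 1 ->
  x <= (1-s)*y + s*x <= y.
Proof. move=> *; split; nra. Qed.
Close Scope R_scope.

Section Tree.
Variables (V E : finType) (ends : E -> V * V).
Hypothesis noloop : forall e, (ends e).1 <> (ends e).2.
Variables (VT : {set V}) (ET : {set E}).
Hypothesis HVT : forall v, v \in VT.
Hypothesis tree : is_tree ends VT ET.
Variable r : V.

Definition avoidE (w : V) := [set e in ET | ~~ incident ends e w].
Definition adjw w := adj ends (avoidE w).
Definition adjT := adj ends ET.
Definition le x u := (x == u) || ~~ connect (adjw u) x r.
Definition lt x u := (x != u) && le x u.

Lemma conn_simple (e : rel V) x y : connect e x y ->
  exists p, [/\ path e x p, last x p = y & uniq (x :: p)].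
Proof.
move=> /connectP [p Pp ->]; case: (shortenP Pp) => p' Pp' Up' _.
by exists p'.
Qed.

Lemma adjw_T w : subrel (adjw w) adjT.
Proof. by apply: adj_sub; apply/subsetP => e; rewrite inE => /andP []. Qed.

Lemma avoid_path w x p : path adjT x p -> w \notin x :: p -> path (adjw w) x p.
Proof.
elim: p x => [//|y p IH] x /= /andP [Hxy Pp].
rewrite !inE negb_or => /andP [xw]; rewrite negb_or => /andP [yw wp].
rewrite IH ?inE ?negb_or ?yw ?wp // andbT.
move: Hxy => /existsP [e /andP [eT J]]; apply/existsP; exists e.
rewrite J andbT inE eT /=; rewrite /incident.
by move: (joins_ends J) => /orP[] /andP [/eqP -> /eqP ->];
  rewrite negb_or (eq_sym x) (eq_sym y) xw yw.
Qed.

Lemma conn_avoid w a p : path adjT a p -> w \notin a :: p ->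
  connect (adjw w) a (last a p).
Proof. move=> P W; apply/connectP; exists p => //; exact: avoid_path. Qed.

Lemma path_conn_pre (e : rel V) y q x : path e y q -> x \in y :: q -> connect e y x.
Proof.
move=> P; rewrite inE => /orP [/eqP -> //|xq].
case/splitPr: xq P => p1 p2; rewrite cat_path /= => /and3P [P1 Hx _].
apply/connectP; exists (rcons p1 x); first by rewrite rcons_path P1.
by rewrite last_rcons.
Qed.

Lemma path_conn_suf (e : rel V) y q x : path e y q -> x \in y :: q ->
  connect e x (last y q).
Proof.
move=> P; rewrite inE => /orP [/eqP -> |xq]; first by apply/connectP; exists q.
case/splitPr: xq P => p1 p2; rewrite cat_path /= => /and3P [_ _ P2].
by apply/connectP; exists p2 => //; rewrite last_cat.
Qed.

Lemma Tconn x y : connect adjT x y.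
Proof. by case: tree => _ _ C _; apply: C. Qed.

Lemma adjw_nw w a b : adjw w a b -> (a != w) && (b != w).
Proof.
move=> /existsP [e /andP]; rewrite inE => -[/andP [_ I] J].
move: I; rewrite /incident.
by move: (joins_ends J) => /orP[] /andP [/eqP -> /eqP ->]; rewrite negb_or;
  case/andP => -> ->.
Qed.

Lemma conn_w_self w y : connect (adjw w) w y -> y = w.
Proof.
move=> /connectP [[|z p] /=]; first by move=> _ ->.
by move=> /andP [H _] _; move: (adjw_nw H); rewrite eqxx.
Qed.

Lemma path_w_avoid w x p : path (adjw w) x p -> x != w -> w \notin x :: p.
Proof.
elim: p x => [|y p IH] x /=; first by rewrite inE eq_sym => _ ->.
move=> /andP [H P] xw; move: (adjw_nw H) => /andP [_ yw].
by rewrite inE negb_or (eq_sym w x) xw /=; apply: IH.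
Qed.

Lemma le_refl x : le x x.
Proof. by rewrite /le eqxx. Qed.

Lemma le_r x : le x r.
Proof.
rewrite /le; case: eqP => //= /eqP xr; apply/negP => /connectP [p P Ep].
have := path_w_avoid P xr; by rewrite Ep mem_last.
Qed.

Lemma leNconn x u : ~~ le x u -> connect (adjw u) x r.
Proof. by rewrite /le negb_or negbK => /andP []. Qed.

Lemma le_hit x u p : le x u -> path adjT x p -> last x p = r -> u \in x :: p.
Proof.
rewrite /le => /orP [/eqP -> _ _|H P L]; first by rewrite mem_head.
apply/negPn/negP => W; move: H; by rewrite -L conn_avoid.
Qed.

Lemma le_trans y x u : le y x -> le x u -> le y u.
Proof.
move=> Hyx Hxu; case: (y =P u) => [->|yu]; first exact: le_refl.
apply/negPn/negP => Hn; move: (leNconn Hn) => C.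
case/connectP: C => p P L.
have Hx : x \in y :: p by apply: (le_hit Hyx) => //; apply/(sub_path (@adjw_T u)).
have C2 := path_conn_suf P Hx; rewrite -L in C2.
case: (x =P u) => [xu|/eqP xu]; first by subst; rewrite Hyx in Hn.
by move: Hxu; rewrite /le (negbTE xu) C2.
Qed.

Lemma le_antisym x u : le x u -> le u x -> x = u.
Proof.
move=> Hxu Hux; apply/eqP/negPn/negP => xu.
have [p [P L U]] := conn_simple (Tconn x r).
have Hu := le_hit Hxu P L; move: Hu; rewrite inE eq_sym (negbTE xu) /= => Hu.
case/splitPr: Hu P U L => p1 p2; rewrite cat_path /= => /and3P [_ _ P2] U L.
have : connect (adjw x) u r.
  rewrite -L last_cat /=; apply: conn_avoid => //.
  by move: U => /= /andP [H _]; move: H; rewrite mem_cat negb_or => /andP [_ H].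
by move: Hux; rewrite /le eq_sym (negbTE xu) /= => /negP.
Qed.

Lemma uniq_split (s1 s2 : seq V) x : uniq (s1 ++ s2) -> x \in s2 -> x \notin s1.
Proof. by rewrite cat_uniq => /and3P [_ /hasPn H _] /H. Qed.

Lemma uniq_split2 (s1 s2 : seq V) x : uniq (s1 ++ s2) -> x \in s1 -> x \notin s2.
Proof.
rewrite cat_uniq => /and3P [_ /hasPn H _] xs1; apply/negP => xs2.
by have := H x xs2; rewrite /= xs1.
Qed.

Lemma pre_conn z u v p1 p2 : path adjT z (p1 ++ v :: p2) ->
  u \notin z :: rcons p1 v -> connect (adjw u) z v.
Proof.
rewrite cat_path /= => /and3P [P1 Hv _] U.
have := @conn_avoid u z (rcons p1 v); rewrite last_rcons; apply => //.
by rewrite rcons_path P1.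
Qed.

Lemma chain_aux z u v p1 p2 : path adjT z (p1 ++ u :: p2) ->
  uniq (z :: p1 ++ u :: p2) -> le z v -> z != v -> v \in p2 ->
  last z (p1 ++ u :: p2) = r -> le u v.
Proof.
move=> P U Hzv zv vp2 L; apply/negPn/negP => /leNconn C.
have Hn : v \notin z :: rcons p1 u.
  apply: (@uniq_split _ p2); by rewrite -cat_rcons -cat_cons in U.
have C1 := pre_conn P Hn.
have : connect (adjw v) z r by apply: connect_trans C1 C.
by move: Hzv; rewrite /le (negbTE zv) /= => /negP.
Qed.

Lemma le_chain z u v : le z u -> le z v -> le u v || le v u.
Proof.
move=> Hu Hv.
case: (z =P u) => [<-|zu]; first by rewrite Hv.
case: (z =P v) => [<-|zv]; first by rewrite Hu orbT.
have [p [P L U]] := conn_simple (Tconn z r).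
have mu := le_hit Hu P L; have mv := le_hit Hv P L.
move: mu mv; rewrite !inE.
have -> : (u == z) = false by apply/eqP => H; apply: zu.
have -> : (v == z) = false by apply/eqP => H; apply: zv.
move=> /= mu mv.
case: (u =P v) => [->|/eqP uv]; first by rewrite le_refl.
case/splitPr: mu P U L mv => p1 p2 P U L.
rewrite mem_cat inE eq_sym (negbTE uv) /= => /orP [vp1|vp2].
- apply/orP; right.
  case/splitPr: vp1 P U L => q1 q2 P U L.
  rewrite -catA /= in P U L.
  apply: (chain_aux P U Hu (introN eqP zu)) L.
  by rewrite mem_cat mem_head orbT.
- by rewrite (chain_aux P U Hv (introN eqP zv)) .
Qed.

Lemma joins_eq2 e a b c d : joins ends e a b -> joins ends e c d ->
  (a = c /\ b = d) \/ (a = d /\ b = c).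
Proof.
rewrite /joins => /orP[] /eqP -> /orP[] /eqP [] -> ->; by [left | right].
Qed.

Lemma AC e u v : e \in ET -> joins ends e u v ->
  ~~ connect (adj ends (ET :\ e)) u v.
Proof.
move=> eT J; apply/negP => C.
rewrite connect_symm in C.
have [p [P L U]] := conn_simple C.
have uv := joins_neq (@noloop) J.
have m0 : 0 < size p.
  by case: p P L U => //= _ L _; move: uv; rewrite -L eqxx.
set m := size p.
pose s := v :: p.
have Hs : size s = m.+1 by [].
pose f := fun i : 'I_(m.+1) => nth v s i.
pose h := fun i : nat => odflt e [pick e' in ET :\ e | joins ends e' (nth v s i) (nth v s i.+1)].
pose g := fun i : 'I_(m.+1) => if i < m then h i else e.
have Hh : forall i, i < m -> h i \in ET :\ e /\ joins ends (h i) (nth v s i) (nth v s i.+1).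
  move=> i Hi; have := (pathP v P) i Hi => /existsP [e0 He0].
  rewrite /h; case: pickP => [e1 /andP [? ?] //| /(_ e0)]; by rewrite He0.
have Nu : forall a b : nat, a < m.+1 -> b < m.+1 ->
    (nth v s a == nth v s b) = (a == b).
  by move=> a b Ha Hb; apply: nth_uniq.
have Hlast : nth v s m = u by rewrite -L /s (last_nth v).
case: tree => _ _ _ Ac.
apply: (Ac [set f i | i in 'I_(m.+1)] [set g i | i in 'I_(m.+1)]).
- by apply/subsetP => x _; apply: HVT.
- apply/subsetP => x /imsetP [i _ ->]; rewrite /g; case: ifP => [/Hh [] | _ //].
  by rewrite inE => /andP [].
exists m.+1, f, g; split => //; split => //.
- move=> i j /eqP; rewrite /f Nu ?ltn_ord //.
  by move/eqP => /val_inj.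
- move=> i j; rewrite /g.
  case: ifP => Hi; case: ifP => Hj.
  + move=> Eh; have [_ J1] := Hh _ Hi; have [_ J2] := Hh _ Hj.
    rewrite Eh in J1; apply: val_inj => /=.
    case: (joins_eq2 J1 J2) => [[E1 _]|[E1 E2]].
      by apply/eqP; move: E1 => /eqP; rewrite Nu ?ltn_ord //; lia.
    move: E1 E2 => /eqP E1 /eqP E2.
    move: E1; rewrite Nu ?ltnS ?ltn_ord //; try lia; move: E2;
      rewrite Nu ?ltnS //; try lia.
  + move=> Eh; have [H _] := Hh _ Hi; by move: H; rewrite Eh !inE eqxx.
  + move=> Eh; have [H _] := Hh _ Hj; by move: H; rewrite -Eh !inE eqxx.
  + move=> _; apply: val_inj; move: (ltn_ord i) (ltn_ord j); rewrite !ltnS.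
    move: Hi Hj => /negbT; rewrite -leqNgt => ? /negbT; rewrite -leqNgt => ? ? ?.
    by apply/eqP; rewrite eqn_leq; apply/andP; split; apply: leq_trans; eauto.
- move=> i; rewrite /g /f /=.
  case: ifP => Hi.
  + have -> : i.+1 %% m.+1 = i.+1 by rewrite modn_small.
    by have [_ ] := Hh _ Hi.
  + have Him : nat_of_ord i = m.
      by move: (ltn_ord i) Hi; rewrite ltnS leq_eqVlt => /orP [/eqP -> //| ->].
    rewrite Him modnn /= Hlast. exact: J.
Qed.

Lemma adjw_AC w e : incident ends e w -> subrel (adjw w) (adj ends (ET :\ e)).
Proof.
move=> I; apply: adj_sub; apply/subsetP => e'; rewrite /avoidE !inE => /andP [eT I'].
by rewrite eT andbT; apply/eqP => E'; subst; rewrite I in I'.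
Qed.

Lemma conn_AC w e x y : incident ends e w -> connect (adjw w) x y ->
  connect (adj ends (ET :\ e)) x y.
Proof. move=> I; apply: connect_sub => a b H; apply: connect1; exact: adjw_AC H. Qed.

Lemma le_orient e u v : e \in ET -> joins ends e u v -> le u v || le v u.
Proof.
move=> eT J; apply/negPn/negP; rewrite negb_or => /andP [H1 H2].
have C1 := leNconn H1; have C2 := leNconn H2.
have /andP [Iu Iv] := joins_inc J.
have := AC eT J; apply/negP/negPn.
apply: (connect_trans (conn_AC Iv C1)).
by rewrite connect_symm //; apply: conn_AC Iu C2.
Qed.

Lemma le_cover e c p w : e \in ET -> joins ends e c p -> le c w -> le w p ->
  w = c \/ w = p.
Proof.
move=> eT J Hcw Hwp.
case: (w =P c) => [|/eqP wc]; first by left.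
case: (w =P p) => [|/eqP wp]; first by right.
exfalso.
have Hpw : ~~ le p w by apply/negP => H; move: wp; rewrite (le_antisym Hwp H) eqxx.
have C := leNconn Hpw.
have A : adjw w c p.
  apply/existsP; exists e; rewrite J inE eT andbT /= /incident.
  by move: (joins_ends J) => /orP[] /andP [/eqP -> /eqP ->]; rewrite negb_or;
   rewrite !(eq_sym _ w) ?wc ?wp.
have C2 : connect (adjw w) c r by apply: connect_trans (connect1 A) C.
by move: Hcw; rewrite /Defs.joins /le eq_sym (negbTE wc) C2.
Qed.

Lemma parent x : x != r -> exists e p,
  [/\ e \in ET, joins ends e x p, le x p & x != p].
Proof.
move=> xr; have [q [P L U]] := conn_simple (Tconn x r).
case: q P L U => [/= _ L|y q /= /andP [Hxy P] L U]; first by rewrite L eqxx in xr.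
move: Hxy => /existsP [e /andP [eT J]].
have xy := joins_neq (@noloop) J.
exists e, y; split => //.
case/orP: (le_orient eT J) => // Hyx.
exfalso; move: Hyx; rewrite /le eq_sym (negbTE xy) /= => /negP; apply.
rewrite -L; apply: conn_avoid => //.
by move: U; rewrite inE => /andP [].
Qed.

Lemma child y x : le y x -> y != x -> exists e w,
  [/\ e \in ET, joins ends e w x, le y w, le w x & w != x].
Proof.
move=> Hyx yx.
have [P0 [P L U]] := conn_simple (Tconn y r).
have Hx := le_hit Hyx P L.
move: Hx; rewrite inE eq_sym (negbTE yx) /= => Hx.
case/splitPr: Hx P U L => p1 p2 P U L.
move: (P); rewrite cat_path /= => /and3P [P1 Hwx P2].
set w := last y p1 in Hwx *.
move: (Hwx) => /existsP [e /andP [eT J]].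
have xn : x \notin y :: p1.
  exact: (@uniq_split (y :: p1) (x :: p2) x U (mem_head _ _)).
have wm : w \in y :: p1 by apply: mem_last.
have wx : w != x by apply/eqP => E'; move: xn; rewrite -E' wm.
have Hwx' : le w x.
  case/orP: (le_orient eT J) => // Hxw; exfalso.
  have wn : w \notin x :: p2.
    exact: (@uniq_split2 (y :: p1) (x :: p2) w U wm).
  have C : connect (adjw w) x r.
    rewrite -L last_cat; apply: conn_avoid => //.
  by move: Hxw; rewrite /le eq_sym (negbTE wx) C.
exists e, w; split => //.
case: (y =P w) => [->|/eqP yw]; first exact: le_refl.
apply/negPn/negP => /leNconn C.
case/connectP: C => Q PQ LQ.
have Hx2 : x \in y :: Q.
  apply: (le_hit Hyx) => //; apply: sub_path PQ; exact: adjw_T.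
have C1 : connect (adjw w) y x := path_conn_pre PQ Hx2.
have C2 : connect (adjw x) y w by apply: conn_avoid.
have /andP [Iw Ix] := joins_inc J.
have := AC eT J; apply/negP/negPn.
apply: (connect_trans _ (conn_AC Iw C1)).
by rewrite connect_symm; apply: conn_AC Ix C2.
Qed.

Lemma noparallel e1 e2 u v : e1 \in ET -> e2 \in ET ->
  joins ends e1 u v -> joins ends e2 u v -> e1 = e2.
Proof.
move=> e1T e2T J1 J2; apply/eqP/negPn/negP => ne.
have := AC e1T J1; apply/negP/negPn.
apply: connect1; apply/existsP; exists e2; by rewrite J2 !inE eq_sym ne e2T.
Qed.

Lemma parent_unique x e1 p1 e2 p2 : e1 \in ET -> e2 \in ET ->
  joins ends e1 x p1 -> joins ends e2 x p2 -> le x p1 -> le x p2 ->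
  x != p1 -> x != p2 -> e1 = e2.
Proof.
move=> e1T e2T J1 J2 H1 H2 n1 n2.
case/orP: (le_chain H1 H2) => H.
- case: (le_cover e2T J2 H1 H) => E'; first by rewrite E' eqxx in n1.
  by subst; apply: (noparallel e1T e2T J1 J2).
- case: (le_cover e1T J1 H2 H) => E'; first by rewrite E' eqxx in n2.
  by subst; apply: (noparallel e1T e2T J1 J2).
Qed.

Lemma sibling e w e' w' v z : e \in ET -> e' \in ET ->
  joins ends e w v -> joins ends e' w' v -> le w v -> le w' v ->
  w' != v -> le z w -> le z w' -> w = w'.
Proof.
move=> eT e'T J J' H H' n' Hz Hz'.
case/orP: (le_chain Hz Hz') => Hc.
- case: (le_cover eT J Hc H') => // E'; by rewrite E' eqxx in n'.
- case: (le_cover e'T J' Hc H) => // E'.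
  by move: (joins_neq (@noloop) J); rewrite E' eqxx.
Qed.


Hypothesis rleaf : r \in leaves ends VT ET.
Hypothesis nondeg2 : forall v, v \in VT -> deg ends ET v <> 2.

Definition Lv := leaves ends VT ET.
Definition D u := [set z in Lv | le z u].

Lemma deg_ge2 v e1 e2 : e1 \in ET -> e2 \in ET -> incident ends e1 v ->
  incident ends e2 v -> e1 != e2 -> 2 <= deg ends ET v.
Proof.
move=> e1T e2T I1 I2 ne; rewrite /deg.
have <- : #|[set e1; e2]| = 2 by rewrite cards2 ne.
apply: subset_leq_card; apply/subsetP => e; rewrite !inE => /orP [] /eqP ->;
  by apply/andP.
Qed.

Lemma third_edge v e1 e2 : 3 <= deg ends ET v -> exists e,
  [/\ e \in ET, incident ends e v, e != e1 & e != e2].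
Proof.
rewrite /deg => H.
set S := [set e in ET | incident ends e v] in H.
have : 0 < #|S :\ e1 :\ e2|.
  move: H; rewrite (cardsD1 e1 S) (cardsD1 e2 (S :\ e1)).
  by case: (e1 \in S); case: (e2 \in S :\ e1) => /=; lia.
move/card_gt0P => [e]; rewrite !inE => /and4P [n2 n1 eT I].
by exists e.
Qed.

Lemma joins_leaf_unique v e1 e2 : v \in Lv -> e1 \in ET -> e2 \in ET ->
  incident ends e1 v -> incident ends e2 v -> e1 = e2.
Proof.
rewrite /Lv /leaves inE => /andP [_ /eqP d1] e1T e2T I1 I2.
apply/eqP/negPn/negP => ne; have := deg_ge2 e1T e2T I1 I2 ne; by rewrite d1.
Qed.

Lemma child_parent_ne e w v ep p : joins ends e w v -> le w v -> w != v ->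
  joins ends ep v p -> le v p -> v != p -> e != ep.
Proof.
move=> J Hwv wv Jp Hvp vp; apply/eqP => E'; subst ep.
case: (joins_eq2 J Jp) => [[E1 _]|[E2 _]]; first by rewrite E1 eqxx in wv.
by subst w; move: (le_antisym Hwv Hvp) => E'; rewrite E' eqxx in wv.
Qed.

Lemma internal_deg v : v \notin Lv -> v != r -> 3 <= deg ends ET v.
Proof.
move=> vL vr.
have [ep [p [epT Jp _ _]]] := parent vr.
have d1 : 1 <= deg ends ET v.
  rewrite /deg card_gt0; apply/set0Pn; exists ep; rewrite inE epT.
  by case/andP: (joins_inc Jp).
have d2 := nondeg2 (HVT v).
have d3 : deg ends ET v != 1.
  by apply: contraNneq vL => d; rewrite /Lv /leaves inE HVT d.
move: d1 d2 d3; case: (deg ends ET v) => [|[|[|n]]] //.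
Qed.

Lemma has_child v : v \notin Lv -> v != r -> exists e w,
  [/\ e \in ET, joins ends e w v, le w v & w != v].
Proof.
move=> vL vr.
have [ep [p [epT Jp Hvp vp]]] := parent vr.
have [e [eT I ne _]] := third_edge ep ep (internal_deg vL vr).
have [w J] := inc_joins I.
have wv : w != v by rewrite eq_sym; apply: (joins_neq (@noloop) J).
exists e, w; split => //; first by rewrite joinsC.
case/orP: (le_orient eT J) => // Hvw.
by move: ne; rewrite (parent_unique eT epT J Jp Hvw Hvp) ?eqxx // eq_sym.
Qed.

Lemma D_mono u v : le u v -> D u \subset D v.
Proof.
move=> H; apply/subsetP => z; rewrite !inE => /andP [-> Hz] /=.
exact: le_trans Hz H.
Qed.

Lemma rD u : r \in D u -> u = r.
Proof. rewrite inE => /andP [_ H]; exact: le_antisym (le_r u) H. Qed.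

Lemma D_nonempty u : exists z, z \in D u.
Proof.
have [n] := ubnP #|[set y | le y u]|; elim: n u => // n IH u Hn.
case: (boolP (u \in Lv)) => uL; first by exists u; rewrite inE uL le_refl.
case: (u =P r) => [->|/eqP ur]; first by exists r; rewrite inE rleaf le_refl.
have [e [w [eT J Hwu wu]]] := has_child uL ur.
have [z Hz] : exists z, z \in D w.
  apply: IH; rewrite ltnS in Hn; apply: (leq_trans _ Hn); apply: proper_card.
  apply/properP; split.
    by apply/subsetP => y; rewrite !inE => H; apply: le_trans H Hwu.
  exists u; rewrite !inE ?le_refl //; apply/negP => H.
  by move: wu; rewrite (le_antisym Hwu H) eqxx.
by exists z; apply: (subsetP (D_mono Hwu)).
Qed.

Lemma D_inj_aux u v : le u v -> D u = D v -> u = v.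
Proof.
move=> Huv Duv; case: (u =P v) => // /eqP uv; exfalso.
have [e [w [eT J Huw Hwv wv]]] := child Huv uv.
case: (v =P r) => [vr|/eqP vr].
  have : r \in D u by rewrite Duv inE rleaf vr le_refl.
  by move/rD => ur; move: uv; rewrite ur vr eqxx.
have [ep [p [epT Jp Hvp vp]]] := parent vr.
have nep := child_parent_ne J Hwv wv Jp Hvp vp.
case: (boolP (v \in Lv)) => vL.
  have /andP [_ I1] := joins_inc J; have /andP [I2 _] := joins_inc Jp.
  by move: nep; rewrite (joins_leaf_unique vL eT epT I1 I2) eqxx.
have [e3 [e3T I3 n31 n32]] := third_edge e ep (internal_deg vL vr).
have [w' J3] := inc_joins I3.
have w'v : w' != v by rewrite eq_sym; apply: (joins_neq (@noloop) J3).
have Hw'v : le w' v.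
  case/orP: (le_orient e3T J3) => // Hvw'.
  by move: n32; rewrite (parent_unique e3T epT J3 Jp Hvw' Hvp) ?eqxx // eq_sym.
rewrite joinsC in J3.
have [z' Hz'] := D_nonempty w'.
have : z' \in D v by apply: (subsetP (D_mono Hw'v)).
rewrite -Duv inE => /andP [_ Hz'u].
move: Hz'; rewrite inE => /andP [_ Hz'w'].
have := sibling eT e3T J J3 Hwv Hw'v w'v (le_trans Hz'u Huw) Hz'w'.
move=> E'; subst w'.
by move: n31; rewrite (noparallel e3T eT J3 J) eqxx.
Qed.

Lemma D_inj u v : D u = D v -> u = v.
Proof.
move=> Duv; have [z Hz] := D_nonempty u.
have Hz' : z \in D v by rewrite -Duv.
move: Hz Hz'; rewrite !inE => /andP [_ H1] /andP [_ H2].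
case/orP: (le_chain H1 H2) => H; first exact: D_inj_aux.
by symmetry; apply: D_inj_aux.
Qed.

Lemma D_sub_le u v : D u \subset D v -> le u v.
Proof.
move=> S; have [z Hz] := D_nonempty u.
have Hz' := subsetP S z Hz.
move: (Hz) (Hz'); rewrite !inE => /andP [_ H1] /andP [_ H2].
case/orP: (le_chain H1 H2) => // H.
suff -> : u = v by apply: le_refl.
by apply: D_inj; apply/eqP; rewrite eqEsubset S /=; apply: D_mono.
Qed.

Lemma leaf_D z : z \in Lv -> z != r -> D z = [set z].
Proof.
move=> zL zr; apply/setP => y; rewrite !inE.
apply/andP/eqP => [[yL Hyz]|->]; last by split; [move: zL; rewrite /Lv /leaves inE | exact: le_refl].
apply/eqP/negPn/negP => yz.
have [e [w [eT J Hyw Hwz wz]]] := child Hyz yz.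
have [ep [p [epT Jp Hzp zp]]] := parent zr.
have nep := child_parent_ne J Hwz wz Jp Hzp zp.
have /andP [_ I1] := joins_inc J; have /andP [I2 _] := joins_inc Jp.
by move: nep; rewrite (joins_leaf_unique zL eT epT I1 I2) eqxx.
Qed.

Definition ltv x u := le x u && (x != u).
Definition indE (S : {set V}) :=
  [set e in ET | ((ends e).1 \in S) && ((ends e).2 \in S)].

Lemma indE_sub S : indE S \subset ET.
Proof. by apply/subsetP => e; rewrite inE => /andP []. Qed.

Lemma indE_subgraph S : is_subgraph ends S (indE S).
Proof. by move=> e; rewrite inE => /andP []. Qed.

Lemma connUp (S : {set V}) m : m \in S ->
  (forall z, z \in S -> z != m -> exists e p,
     [/\ e \in ET, joins ends e z p, ltv z p & p \in S]) ->
  connected ends S (indE S).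
Proof.
move=> mS H.
have Hc : forall z, z \in S -> connect (adj ends (indE S)) z m.
  move=> z; have [n] := ubnP #|[set y | ltv z y]|; elim: n z => // n IH z Hn zS.
  case: (z =P m) => [->|/eqP zm]; first exact: connect0.
  have [e [p [eT J Hzp pS]]] := H z zS zm.
  apply: (connect_trans (connect1 _)); last first.
    apply: IH pS; rewrite ltnS in Hn; apply: (leq_trans _ Hn); apply: proper_card.
    apply/properP; split.
      apply/subsetP => y; rewrite !inE /ltv => /andP [H1 H2].
      move: Hzp => /andP [H3 H4].
      rewrite (le_trans H3 H1) /=; apply/eqP => E'; subst y.
      by move: H4; rewrite (le_antisym H3 H1) eqxx.
    exists p; rewrite !inE /ltv ?le_refl ?eqxx ?andbF //.
  apply/existsP; exists e; rewrite J andbT inE eT /=.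
  by move: (joins_ends J) => /orP[] /andP [/eqP -> /eqP ->]; rewrite zS pS.
move=> x y xS yS; apply: connect_trans (Hc x xS) _.
by rewrite connect_symm; apply: Hc.
Qed.

Variables (VC : {set V}) (EC : {set E}) (l : E -> R) (n : nat)
  (f : 'I_n.+1 -> V) (g : 'I_n.+1 -> E).
Hypothesis Hn : 2 <= n.
Hypothesis finj : injective f.
Hypothesis ginj : injective g.
Hypothesis Hfg : forall i, joins ends (g i) (f i) (f (ordS i)).
Hypothesis HVC : VC = [set f i | i in 'I_n.+1].
Hypothesis HEC : EC = [set g i | i in 'I_n.+1].
Hypothesis HVCL : VC = Lv.
Hypothesis Hr : r = f ord_max.
Hypothesis lpos : forall e, Rlt R0 (l e).
Hypothesis sct : shortcut_tree ends l VT ET VC EC.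

Definition idx x : 'I_n.+1 := odflt ord0 [pick i | f i == x].

Lemma idxK x : x \in VC -> f (idx x) = x.
Proof.
rewrite HVC => /imsetP [i _ ->]; rewrite /idx; case: pickP => [j /eqP //|/(_ i)].
by rewrite eqxx.
Qed.

Lemma fK i : idx (f i) = i.
Proof. by apply: finj; apply: idxK; rewrite HVC imset_f. Qed.

Lemma f_Lv i : f i \in Lv.
Proof. by rewrite -HVCL HVC imset_f. Qed.

Lemma Lv_f z : z \in Lv -> f (idx z) = z.
Proof. by rewrite -HVCL; apply: idxK. Qed.

Lemma CL (VS : {set V}) (ES : {set E}) (i1 j1 i2 j2 : 'I_n.+1) : ES \subset EC ->
  is_subgraph ends VS ES -> connected ends VS ES ->
  i1 < j1 -> j1 < i2 -> i2 < j2 -> f i1 \in VS -> f i2 \in VS ->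
  (f j1 \in VS) || (f j2 \in VS).
Proof.
move=> sE sg cn h1 h2 h3 a1 a2; apply/negPn/negP; rewrite negb_or => /andP [n1 n2].
pose P := [pred x | (j1 < idx x) && (idx x < j2)].
have key : forall m, f m \in VS -> f (ordS m) \in VS -> P (f m) = P (f (ordS m)).
  move=> m a b; rewrite /P /= !fK.
  have m1 : m != j1 by apply: contraNneq n1 => <-.
  have m2 : m != j2 by apply: contraNneq n2 => <-.
  have s1 : ordS m != j1 by apply: contraNneq n1 => <-.
  have s2 : ordS m != j2 by apply: contraNneq n2 => <-.
  move: m1 m2 s1 s2; rewrite -!val_eqE /=.
  have := ltn_ord m; have := ltn_ord j2; rewrite !ltnS.
  move=> Hj2 Hm' m1 m2 s1 s2.
  case: (ltnP m n) => Hm.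
    rewrite modn_small in s1 s2 *; last by rewrite ltnS.
    by apply/idP/idP; lia.
  have Em : nat_of_ord m = n by lia.
  move: s1 s2 m1 m2; rewrite Em modnn => s1 s2 m1 m2.
  by apply/idP/idP; lia.
have cl : closed (adj ends ES) P.
  move=> x y /existsP [e /andP [eES J]].
  have /andP [xS yS] : (x \in VS) && (y \in VS).
    by have := sg e eES; move: (joins_ends J) => /orP[] /andP [/eqP -> /eqP ->] /andP [-> ->].
  have : e \in EC by apply: (subsetP sE).
  rewrite HEC => /imsetP [m _ Em]; subst e.
  case: (joins_eq2 J (Hfg m)) => [[Ex Ey]|[Ex Ey]]; subst x y.
    by apply: key.
  by symmetry; apply: key.
have := closed_connect cl (cn _ _ a1 a2).
rewrite /P !inE !fK; lia.
Qed.

Lemma interleave (A VS1 VS2 : {set V}) (ES1 ES2 : {set E}) (i1 j1 i2 j2 : 'I_n.+1) :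
  conn_sub_cont ends VT ET A VS1 ES1 ->
  conn_sub_cont ends VT ET (Lv :\: A) VS2 ES2 ->
  [disjoint ES1 & ES2] -> i1 < j1 -> j1 < i2 -> i2 < j2 ->
  f i1 \in A -> f i2 \in A -> f j1 \notin A -> f j2 \notin A ->
  A \subset Lv -> False.
Proof.
move=> C1 C2 dis h1 h2 h3 a1 a2 b1 b2 AL.
case: sct => _ _ S3 S4.
have PA : A \proper Lv.
  by apply/properP; split => //; exists (f j1) => //; exact: f_Lv.
have PA' : Lv :\: A \proper Lv.
  apply/properP; split; first exact: subsetDl.
  by exists (f i1); [exact: f_Lv | rewrite inE a1].
have [W1 [F1 [[sW1 sF1 sg1 cn1 AW1] le1]]] := S4 A PA VS1 ES1 C1.
have [W2 [F2 [[sW2 sF2 sg2 cn2 AW2] le2]]] := S4 _ PA' VS2 ES2 C2.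
have [c [cW1 cW2]] : exists c, c \in W1 /\ c \in W2.
  have := CL sF1 sg1 cn1 h1 h2 h3 (subsetP AW1 _ a1) (subsetP AW1 _ a2).
  case/orP => H; [exists (f j1) | exists (f j2)]; split => //;
    apply: (subsetP AW2); by rewrite inE ?b1 ?b2 f_Lv.
have U : conn_sub_cont ends VC EC Lv (W1 :|: W2) (F1 :|: F2).
  split.
  - by rewrite subUset sW1.
  - by rewrite subUset sF1.
  - move=> e; rewrite inE => /orP [] H; [move: (sg1 e H) | move: (sg2 e H)];
      by rewrite !inE => /andP [-> ->]; rewrite ?orbT.
  - have Cc : forall x, x \in W1 :|: W2 -> connect (adj ends (F1 :|: F2)) x c.
      move=> x; rewrite inE => /orP [] Hx.
        exact: conn_subset (subsetUl _ _) (cn1 x c Hx cW1).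
      exact: conn_subset (subsetUr _ _) (cn2 x c Hx cW2).
    move=> x y Hx Hy; apply: (connect_trans (Cc x Hx)).
    by rewrite connect_symm; apply: Cc.
  - apply/subsetP => z zL; rewrite inE; case: (boolP (z \in A)) => zA.
      by rewrite (subsetP AW1 z zA).
    by rewrite (subsetP AW2) ?orbT // inE zA zL.
have H3 := S3 _ _ U.
have lnn : forall e, Rle R0 (l e) by move=> e; apply: Rlt_le.
have H4 := lenU lnn F1 F2.
case: C1 => _ sE1 _ _ _; case: C2 => _ sE2 _ _ _.
have H5 := len_disj lnn dis sE1 sE2.
lra.
Qed.

Definition sub u := [set x | le x u].

Lemma parent_in_sub z u e p : le z u -> z != u -> e \in ET ->
  joins ends e z p -> le z p -> z != p -> le p u.
Proof.
move=> Hzu zu eT J Hzp zp.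
case/orP: (le_chain Hzp Hzu) => // Hup.
case: (le_cover eT J Hzu Hup) => E'; first by rewrite E' eqxx in zu.
by rewrite E' le_refl.
Qed.

Lemma step_sub z w : z \in sub w -> z != w -> exists e p,
  [/\ e \in ET, joins ends e z p, ltv z p & p \in sub w].
Proof.
rewrite inE => Hzw zw.
have zr : z != r.
  apply: contraNneq zw => E'; subst z.
  by rewrite (le_antisym (le_r w) Hzw) eqxx.
have [e [p [eT J Hzp zp]]] := parent zr.
exists e, p; split => //; first by rewrite /ltv Hzp zp.
by rewrite inE (parent_in_sub Hzw zw eT J Hzp zp).
Qed.

Lemma conn_sub u : connected ends (sub u) (indE (sub u)).
Proof.
by apply: (connUp (m := u)); [rewrite inE le_refl | move=> z zS zu; apply: step_sub zS zu].
Qed.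

Lemma conn_cosub (S : {set V}) :
  (forall x y, le x y -> y \in S -> x \in S) -> r \notin S ->
  connected ends (~: S) (indE (~: S)).
Proof.
move=> dc rS; apply: (connUp (m := r)); first by rewrite inE.
move=> z; rewrite inE => zS zr.
have [e [p [eT J Hzp zp]]] := parent zr.
exists e, p; split => //; first by rewrite /ltv Hzp zp.
by rewrite inE; apply: contra zS; apply: dc.
Qed.

Lemma indE_disj (S1 S2 : {set V}) v :
  (forall x, x \in S1 -> x \in S2 -> x = v) -> [disjoint indE S1 & indE S2].
Proof.
move=> H; rewrite -setI_eq0; apply/eqP/setP => e; rewrite !inE.
apply/negP => /andP [/and3P [_ a1 b1] /and3P [_ a2 b2]].
apply: (@noloop e); by rewrite (H _ a1 a2) (H _ b1 b2).
Qed.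

Lemma csc (S A : {set V}) : A \subset S -> connected ends S (indE S) ->
  conn_sub_cont ends VT ET A S (indE S).
Proof.
move=> AS C; split => //; [by apply/subsetP => x _; apply: HVT | exact: indE_sub |
  exact: indE_subgraph].
Qed.

Lemma r_notin_sub w : w != r -> r \notin sub w.
Proof. by move=> wr; rewrite inE; apply/negP => H; rewrite (le_antisym (le_r w) H) eqxx in wr. Qed.

Lemma D_sub_Lv u : D u \subset Lv.
Proof. by apply/subsetP => x; rewrite inE => /andP []. Qed.

Lemma convex u (i j k : 'I_n.+1) : u != r -> i < j -> j < k ->
  f i \in D u -> f k \in D u -> f j \in D u.
Proof.
move=> ur h1 h2 fi fk; apply/negPn/negP => fj.
have kn : k < (@ord_max n).
  rewrite /=; have := ltn_ord k; rewrite ltnS leq_eqVlt => /orP [/eqP Ek|//].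
  have : f k = r by rewrite Hr; congr f; apply: val_inj.
  by move=> E'; move: fk; rewrite E' => /rD E2; rewrite E2 eqxx in ur.
have dc : forall x y, le x y -> y \in sub u -> x \in sub u.
  by move=> x y Hxy; rewrite !inE; apply: le_trans.
apply: (@interleave (D u) (sub u) (~: sub u) _ _ i j k ord_max
  (csc _ (@conn_sub u)) (csc _ (@conn_cosub _ dc (r_notin_sub ur))) (indE_disj (v := r) _) h1 h2 kn fi fk fj).
- by apply/subsetP => x; rewrite !inE => /andP [].
- apply/subsetP => x; rewrite in_setD in_setC => /andP [H xL]; apply: contra H => H'.
  by rewrite /D in_set xL /=; rewrite /sub in_set in H'.
- by move=> x; rewrite !inE => ->.
- by rewrite -Hr; apply/negP => /rD E'; rewrite E' eqxx in ur.
- exact: D_sub_Lv.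
Qed.

Lemma w_ne_r w v e : joins ends e w v -> le w v -> w != v -> w != r.
Proof.
move=> _ Hwv wv; apply: contraNneq wv => E'; subst w.
by rewrite (le_antisym (le_r v) Hwv).
Qed.

Lemma idx_lt_max (i : 'I_n.+1) u : f i \in D u -> u != r -> i < n.
Proof.
move=> H ur; have := ltn_ord i; rewrite ltnS leq_eqVlt => /orP [/eqP Ei|//].
have : f i = r by rewrite Hr; congr f; apply: val_inj.
by move=> E'; move: H; rewrite E' => /rD E2; rewrite E2 eqxx in ur.
Qed.

Lemma cubic v e1 w1 e2 w2 e3 w3 (i1 i2 i3 : 'I_n.+1) : v != r ->
  e1 \in ET -> e2 \in ET -> e3 \in ET ->
  joins ends e1 w1 v -> joins ends e2 w2 v -> joins ends e3 w3 v ->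
  le w1 v -> le w2 v -> le w3 v -> w1 != v -> w2 != v -> w3 != v ->
  w1 != w2 -> w2 != w3 ->
  f i1 \in D w1 -> f i2 \in D w2 -> f i3 \in D w3 -> i1 < i2 -> i2 < i3 -> False.
Proof.
move=> vr e1T e2T e3T J1 J2 J3 H1 H2 H3 n1 n2 n3 d12 d23 z1 z2 z3 h1 h2.
set S13 := sub w1 :|: sub w3.
set VS1 := v |: S13.
set VS2 := ~: S13.
set A := D w1 :|: D w3.
have r1 := w_ne_r J1 H1 n1; have r3 := w_ne_r J3 H3 n3.
have C1 : connected ends VS1 (indE VS1).
  apply: (connUp (m := v)); first by rewrite !inE eqxx.
  move=> z; rewrite !inE => /orP [->//|/orP [] zw] _.
  - case: (z =P w1) => [->|/eqP zw1].
      by exists e1, v; split => //; [rewrite /ltv H1 n1 | rewrite !inE eqxx].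
    have zw' : z \in sub w1 by rewrite inE.
    have [e [p [eT J Hzp pS]]] := step_sub zw' zw1.
    move: pS; rewrite inE => pS.
    by exists e, p; split => //; rewrite !inE pS orbT.
  - case: (z =P w3) => [->|/eqP zw3].
      by exists e3, v; split => //; [rewrite /ltv H3 n3 | rewrite !inE eqxx].
    have zw' : z \in sub w3 by rewrite inE.
    have [e [p [eT J Hzp pS]]] := step_sub zw' zw3.
    move: pS; rewrite inE => pS.
    by exists e, p; split => //; rewrite !inE pS !orbT.
have dc : forall x y, le x y -> y \in S13 -> x \in S13.
  move=> x y Hxy; rewrite !inE => /orP [] H; by rewrite (le_trans Hxy H) ?orbT.
have rS : r \notin S13.
  rewrite !inE negb_or; apply/andP; split; apply/negP => H.
    by rewrite (le_antisym (le_r w1) H) eqxx in r1.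
  by rewrite (le_antisym (le_r w3) H) eqxx in r3.
have C2 := @conn_cosub S13 dc rS.
have z2A : f i2 \notin A.
  rewrite !inE negb_or; apply/andP; split; apply/negP => /andP [_ H].
    move: z2; rewrite inE => /andP [_ H'].
    by move: d12; rewrite (sibling e1T e2T J1 J2 H1 H2 n2 H H') eqxx.
  move: z2; rewrite inE => /andP [_ H'].
  by move: d23; rewrite (sibling e2T e3T J2 J3 H2 H3 n3 H' H) eqxx.
apply: (@interleave A VS1 VS2 _ _ i1 i2 i3 ord_max (csc _ C1) (csc _ C2)
  (indE_disj (v := v) _) h1 h2 (idx_lt_max z3 r3)).
- apply/subsetP => x; rewrite !inE => /orP [] /andP [_ H]; by rewrite H ?orbT.
- apply/subsetP => x; rewrite in_setD => /andP [H xL]; rewrite in_setC.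
  apply: contra H; rewrite /S13 /A !in_setU /sub /D !in_set.
  move: xL; rewrite /Lv /leaves in_set => -> /=.
  by case/orP => ->; rewrite ?orbT.
- by move=> x; rewrite !inE => /orP [/eqP ->//|H] /negP.
- by rewrite inE z1.
- by rewrite inE z3 orbT.
- exact: z2A.
- rewrite -Hr !inE negb_or; apply/andP; split; apply/negP => /andP [_ H].
    by rewrite (le_antisym (le_r w1) H) eqxx in r1.
  by rewrite (le_antisym (le_r w3) H) eqxx in r3.
- by rewrite subUset !D_sub_Lv.
Qed.

Lemma edge_avoid v (s : seq E) : size s < deg ends ET v ->
  exists e, [/\ e \in ET, incident ends e v & e \notin s].
Proof.
rewrite /deg => H.
case: (boolP ([set e in ET | incident ends e v] \subset [set x in s])) => S.
  have H' := subset_leq_card S.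
  have H3 : #|[set x in s]| <= size s by rewrite cardsE card_size.
  have H2 := leq_trans H' H3.
  by move: (leq_ltn_trans H2 H); rewrite ltnn.
move: S => /subsetPn [e]; rewrite !inE => /andP [eT I] es.
by exists e.
Qed.


Lemma child_of_edge v ep p e : joins ends ep v p -> le v p -> v != p ->
  ep \in ET -> e \in ET -> incident ends e v -> e != ep ->
  exists w, [/\ joins ends e w v, le w v & w != v].
Proof.
move=> Jp Hvp vp epT eT I ne.
have [w J] := inc_joins I.
have wv : w != v by rewrite eq_sym; apply: (joins_neq (@noloop) J).
exists w; split => //; first by rewrite joinsC.
case/orP: (le_orient eT J) => // Hvw.
by move: ne; rewrite (parent_unique eT epT J Jp Hvw Hvp) ?eqxx // eq_sym.
Qed.

Lemma deg_internal v : v \notin Lv -> v != r -> deg ends ET v = 3.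
Proof.
move=> vL vr; have d3 := internal_deg vL vr.
case: (ltngtP (deg ends ET v) 3) => // H; first by move: (leq_ltn_trans d3 H); rewrite ltnn.
have [ep [p [epT Jp Hvp vp]]] := parent vr.
have hs1 : size [:: ep] < deg ends ET v by apply: ltn_trans H.
have [e1 [e1T I1 n1]] := @edge_avoid v [:: ep] hs1.
have hs2 : size [:: ep; e1] < deg ends ET v by apply: ltn_trans H.
have [e2 [e2T I2 n2]] := @edge_avoid v [:: ep; e1] hs2.
have [e3 [e3T I3 n3]] := @edge_avoid v [:: ep; e1; e2] H.
move: n1 n2 n3; rewrite !inE !negb_or => n1 /andP [n2 n21] /and3P [n3 n31 n32].
have [w1 [J1 H1 m1]] := child_of_edge Jp Hvp vp epT e1T I1 n1.
have [w2 [J2 H2 m2]] := child_of_edge Jp Hvp vp epT e2T I2 n2.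
have [w3 [J3 H3 m3]] := child_of_edge Jp Hvp vp epT e3T I3 n3.
have dw : forall ea eb wa wb, ea \in ET -> eb \in ET -> joins ends ea wa v ->
    joins ends eb wb v -> eb != ea -> wa != wb.
  move=> ea eb wa wb eaT ebT Ja Jb ne; apply/eqP => E'; subst wb.
  by move: ne; rewrite (noparallel eaT ebT Ja Jb) eqxx.
have d12 := dw _ _ _ _ e1T e2T J1 J2 n21.
have d13 := dw _ _ _ _ e1T e3T J1 J3 n31.
have d23 := dw _ _ _ _ e2T e3T J2 J3 n32.
have d21 : w2 != w1 by rewrite eq_sym.
have d31 : w3 != w1 by rewrite eq_sym.
have d32 : w3 != w2 by rewrite eq_sym.
have [z1 Z1] := D_nonempty w1.
have [z2 Z2] := D_nonempty w2.
have [z3 Z3] := D_nonempty w3.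
have zf : forall z w, z \in D w -> f (idx z) \in D w.
  by move=> z w Z; rewrite Lv_f //; move: Z; rewrite inE => /andP [].
have Z1' := zf _ _ Z1; have Z2' := zf _ _ Z2; have Z3' := zf _ _ Z3.
have dz : forall ea eb wa wb (ia ib : 'I_n.+1), ea \in ET -> eb \in ET ->
    joins ends ea wa v -> joins ends eb wb v -> le wa v -> le wb v -> wb != v ->
    wa != wb -> f ia \in D wa -> f ib \in D wb -> (ia : nat) <> ib.
  move=> ea eb wa wb ia ib eaT ebT Ja Jb Ha Hb nb dab Za Zb E'.
  have E2 : ia = ib by apply: val_inj.
  subst ib; move: Za Zb; rewrite !inE => /andP [_ Ha'] /andP [_ Hb'].
  by move: dab; rewrite (sibling eaT ebT Ja Jb Ha Hb nb Ha' Hb') eqxx.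
have ne12 := dz _ _ _ _ _ _ e1T e2T J1 J2 H1 H2 m2 d12 Z1' Z2'.
have ne13 := dz _ _ _ _ _ _ e1T e3T J1 J3 H1 H3 m3 d13 Z1' Z3'.
have ne23 := dz _ _ _ _ _ _ e2T e3T J2 J3 H2 H3 m3 d23 Z2' Z3'.
exfalso.
case: (order3 ne12 ne13 ne23) => [[h12 h23]|[[h13 h32]|[[h21 h13]|[[h23 h31]|[[h31 h12]|[h32 h21]]]]]].
- exact: (cubic vr e1T e2T e3T J1 J2 J3 H1 H2 H3 m1 m2 m3 d12 d23 Z1' Z2' Z3' h12 h23).
- exact: (cubic vr e1T e3T e2T J1 J3 J2 H1 H3 H2 m1 m3 m2 d13 d32 Z1' Z3' Z2' h13 h32).
- exact: (cubic vr e2T e1T e3T J2 J1 J3 H2 H1 H3 m2 m1 m3 d21 d13 Z2' Z1' Z3' h21 h13).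
- exact: (cubic vr e2T e3T e1T J2 J3 J1 H2 H3 H1 m2 m3 m1 d23 d31 Z2' Z3' Z1' h23 h31).
- exact: (cubic vr e3T e1T e2T J3 J1 J2 H3 H1 H2 m3 m1 m2 d31 d12 Z3' Z1' Z2' h31 h12).
- exact: (cubic vr e3T e2T e1T J3 J2 J1 H3 H2 H1 m3 m2 m1 d32 d21 Z3' Z2' Z1' h32 h21).
Qed.

Definition bI u : nat := \max_(i : 'I_n.+1 | f i \in D u) i.
Definition aI u : nat := n - \max_(i : 'I_n.+1 | f i \in D u) (n - i).

Lemma D_card u : 0 < #|[pred i : 'I_n.+1 | f i \in D u]|.
Proof.
have [z Hz] := D_nonempty u; apply/card_gt0P; exists (idx z).
by rewrite inE Lv_f //; move: Hz; rewrite inE => /andP [].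
Qed.

Lemma bI_wit u : exists2 i : 'I_n.+1, f i \in D u & bI u = i.
Proof.
have [i Pi Ei] := eq_bigmax_cond (fun i : 'I_n.+1 => nat_of_ord i) (D_card u).
by exists i => //; rewrite /bI; exact: Ei.
Qed.

Lemma aI_wit u : exists2 i : 'I_n.+1, f i \in D u & aI u = i.
Proof.
have [i Pi Ei] := eq_bigmax_cond (fun i : 'I_n.+1 => n - i) (D_card u).
exists i => //; rewrite /aI.
have -> : \max_(i0 : 'I_n.+1 | f i0 \in D u) (n - i0) = n - i by exact: Ei.
have := ltn_ord i; rewrite ltnS => ?; lia.
Qed.

Lemma IP_in u (i : 'I_n.+1) : f i \in D u -> aI u <= i <= bI u.
Proof.
move=> H; apply/andP; split.
  rewrite /aI.
  have Hm : n - i <= \max_(j : 'I_n.+1 | f j \in D u) (n - j)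
    := @leq_bigmax_cond _ (fun j : 'I_n.+1 => f j \in D u) (fun j : 'I_n.+1 => n - j) i H.
  move: Hm; set M := \max_(j : 'I_n.+1 | f j \in D u) (n - j).
  have := ltn_ord i; rewrite ltnS => ? ?; lia.
exact: (@leq_bigmax_cond _ (fun j : 'I_n.+1 => f j \in D u) (fun j : 'I_n.+1 => nat_of_ord j) i H).
Qed.

Lemma D_r : D r = Lv.
Proof. by apply/setP => z; rewrite inE le_r andbT. Qed.

Lemma IP u (i : 'I_n.+1) : (aI u <= i <= bI u) = (f i \in D u).
Proof.
apply/idP/idP; last exact: IP_in.
case/andP => h1 h2.
case: (u =P r) => [->|/eqP ur]; first by rewrite D_r f_Lv.
have [j1 P1 E1] := aI_wit u; have [j2 P2 E2] := bI_wit u.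
rewrite E1 leq_eqVlt in h1; rewrite E2 leq_eqVlt in h2.
case/orP: h1 => [/eqP Eq|h1]; first by rewrite (_ : i = j1) //; apply: val_inj.
case/orP: h2 => [/eqP Eq|h2]; first by rewrite (_ : i = j2) //; apply: val_inj.
exact: convex ur h1 h2 P1 P2.
Qed.

Lemma aI_le_bI u : aI u <= bI u.
Proof. by have [i Pi _] := aI_wit u; case/andP: (IP_in Pi); apply: leq_trans. Qed.

Lemma bI_le_n u : bI u <= n.
Proof. by have [i _ ->] := bI_wit u; rewrite -ltnS. Qed.

Lemma sub_interval u v : aI v <= aI u -> bI u <= bI v -> D u \subset D v.
Proof.
move=> h1 h2; apply/subsetP => z Hz.
have zL : z \in Lv by move: Hz; rewrite inE => /andP [].
rewrite -(Lv_f zL) -IP; rewrite -(Lv_f zL) -IP in Hz.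
case/andP: Hz => ? ?; apply/andP; split; [exact: leq_trans h1 _ | exact: leq_trans h2].
Qed.

Lemma le_interval u v : le u v -> aI v <= aI u /\ bI u <= bI v.
Proof.
move=> H; have S := D_mono H.
have [i Pi Ei] := aI_wit u; have [j Pj Ej] := bI_wit u.
have := IP_in (subsetP S _ Pi); have := IP_in (subsetP S _ Pj).
rewrite Ei Ej => /andP [_ ?] /andP [? _]; by split.
Qed.

Lemma interval_le u v : aI v <= aI u -> bI u <= bI v -> le u v.
Proof. by move=> h1 h2; apply: D_sub_le; apply: sub_interval. Qed.

Lemma interval_inj u v : aI u = aI v -> bI u = bI v -> u = v.
Proof.
move=> h1 h2; apply: D_inj; apply/eqP; rewrite eqEsubset.
by rewrite !sub_interval // ?h1 ?h2.
Qed.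

Lemma leaf_interval z : z \in Lv -> z != r -> aI z = idx z /\ bI z = idx z.
Proof.
move=> zL zr; have DE := leaf_D zL zr.
have [i Pi Ei] := aI_wit z; have [j Pj Ej] := bI_wit z.
move: Pi Pj; rewrite DE !inE => /eqP Pi /eqP Pj.
by rewrite Ei Ej; split; [rewrite -Pi fK | rewrite -Pj fK].
Qed.

Lemma r_interval : aI r = 0 /\ bI r = n.
Proof.
have h0 : f ord0 \in D r by rewrite D_r f_Lv.
have hn : f ord_max \in D r by rewrite D_r f_Lv.
have := IP_in h0; have := IP_in hn; have := bI_le_n r.
move=> H1 /andP [h1 h2] /andP [h3 h4]; simpl in h1, h2, h3, h4; split; lia.
Qed.

Lemma rchild_a0 c e : e \in ET -> joins ends e c r -> c != r -> aI c = 0.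
Proof.
move=> eT J cr.
have f0r : f ord0 != r.
  rewrite Hr; apply/eqP => /finj /(congr1 val) /= E0; move: Hn; rewrite -E0; done.
have [e' [w [e'T J' H1 H2 wr]]] := child (le_r (f ord0)) f0r.
have /andP [_ I1] := joins_inc J; have /andP [_ I2] := joins_inc J'.
have E' := joins_leaf_unique rleaf eT e'T I1 I2; subst e'.
have J2 : joins ends e r c by rewrite joinsC.
have J3 : joins ends e r w by rewrite joinsC.
have Ew := joins_other J2 J3; subst w.
have : f ord0 \in D c by rewrite inE f_Lv H1.
move/IP_in => /andP [h _]; apply/eqP; rewrite -leqn0; exact: h.
Qed.

Local Open Scope R_scope.

Hypothesis HEall : forall e, (e \in ET) || (e \in EC).

Definition pos u : R * R := (INR (aI u), INR (bI u)).
Definition wb e : R :=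
  if e == g ord_max then (-1) else if e == g (inord n.-1) then 1 else 0.
Definition arc e (t : R) : R * R :=
  (((1 - t) * (pos (ends e).1).1 + t * (pos (ends e).2).1 + wb e * (t * (1 - t))),
   ((1 - t) * (pos (ends e).1).2 + t * (pos (ends e).2).2 + wb e * (t * (1 - t)))).

Lemma g_notin_ET i : g i \notin ET.
Proof.
case: sct => _ H _ _; apply/negP => gi.
have : g i \in ET :&: EC by rewrite inE gi HEC imset_f.
by rewrite H inE.
Qed.

Lemma wb_tree e : e \in ET -> wb e = 0.
Proof.
move=> eT; rewrite /wb; case: eqP => [E'|_]; first by move: eT; rewrite E' (negbTE (g_notin_ET _)).
case: eqP => [E'|//]; by move: eT; rewrite E' (negbTE (g_notin_ET _)).
Qed.

Lemma inord_nm1 : nat_of_ord (inord n.-1 : 'I_n.+1) = n.-1.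
Proof. by rewrite inordK // ltnS leq_pred. Qed.

Lemma ne_max_nm1 : (ord_max : 'I_n.+1) != inord n.-1.
Proof. rewrite -val_eqE /= inord_nm1; apply/eqP; move: Hn; clear; lia. Qed.

Lemma pos_leaf (i : 'I_n.+1) : (i < n)%N -> pos (f i) = (INR i, INR i).
Proof.
move=> H.
have fr : f i != r.
  rewrite Hr; apply/eqP => /finj /(congr1 val) /= Ei; by rewrite Ei ltnn in H.
have [h1 h2] := leaf_interval (f_Lv i) fr.
by rewrite /pos h1 h2 fK.
Qed.

Lemma pos_r : pos r = (0, INR n).
Proof. by have [h1 h2] := r_interval; rewrite /pos h1 h2. Qed.

Lemma ends_g i : ((ends (g i)).1 = f i /\ (ends (g i)).2 = f (ordS i)) \/
                 ((ends (g i)).1 = f (ordS i) /\ (ends (g i)).2 = f i).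
Proof.
by move: (joins_ends (Hfg i)) => /orP[] /andP [/eqP -> /eqP ->]; [left | right].
Qed.

Lemma nf_line (i : 'I_n.+1) t : (i.+1 < n)%N -> exists s,
  (s = t \/ s = 1 - t) /\ arc (g i) t = (INR i + s, INR i + s).
Proof.
move=> H.
have wi : wb (g i) = 0.
  rewrite /wb; case: eqP => [/ginj E'|_]; first by move: H; rewrite E' /=; lia.
  case: eqP => [/ginj E'|//]; move: H; rewrite E' inord_nm1; lia.
have oS : nat_of_ord (ordS i) = i.+1 by rewrite /= modn_small //; lia.
have p1 : pos (f i) = (INR i, INR i) by apply: pos_leaf; lia.
have p2 : pos (f (ordS i)) = (INR i + 1, INR i + 1).
  by rewrite pos_leaf ?oS // S_INR.
rewrite /arc wi; case: (ends_g i) => [[-> ->]|[-> ->]]; rewrite p1 p2 /=.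
  by exists t; split; [left | congr pair; ring].
by exists (1 - t); split; [right | congr pair; ring].
Qed.

Lemma nf_a2 t : exists s, (s = t \/ s = 1 - t) /\
  arc (g (inord n.-1)) t = (s * (INR n - 1) + s * (1 - s), INR n - s + s * (1 - s)).
Proof.
set i : 'I_n.+1 := inord n.-1.
have wi : wb (g i) = 1.
  rewrite /wb; case: eqP => [/ginj E'|_]; last by rewrite eqxx.
  by move: ne_max_nm1; rewrite -/i E' eqxx.
have oS : ordS i = ord_max.
  have h0 : (0 < n)%N by move: Hn; clear; lia.
  by apply: val_inj; rewrite /= inord_nm1 (prednK h0) modn_small.
have p1 : pos (f i) = (INR n - 1, INR n - 1).
  rewrite pos_leaf /i inord_nm1; last lia.
  by rewrite -{3 4}(prednK (n := n)) ?S_INR; [congr pair; ring | lia].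
have p2 : pos (f (ordS i)) = (0, INR n) by rewrite oS -Hr pos_r.
rewrite /arc wi; case: (ends_g i) => [[-> ->]|[-> ->]]; rewrite p1 p2 /=.
  by exists (1 - t); split; [right | congr pair; ring].
by exists t; split; [left | congr pair; ring].
Qed.

Lemma nf_a1 t : exists s, (s = t \/ s = 1 - t) /\
  arc (g ord_max) t = (- (s * (1 - s)), (1 - s) * INR n - s * (1 - s)).
Proof.
have wi : wb (g ord_max) = (-1) by rewrite /wb eqxx.
have oS : ordS (ord_max : 'I_n.+1) = ord0 by apply: val_inj; rewrite /= modnn.
have p1 : pos (f ord0) = (0, 0) by rewrite pos_leaf //=; lia.
have p2 : pos (f ord_max) = (0, INR n) by rewrite -Hr pos_r.
rewrite /arc wi; case: (ends_g ord_max) => [[-> ->]|[-> ->]]; rewrite oS p1 p2 /=.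
  by exists t; split; [left | congr pair; ring].
by exists (1 - t); split; [right | congr pair; ring].
Qed.

Lemma joins_ends12 e : joins ends e (ends e).1 (ends e).2.
Proof. by rewrite /joins; case: (ends e) => a b; rewrite eqxx. Qed.

Lemma nf_tree e t : e \in ET -> exists c p s,
  [/\ joins ends e c p, le c p, c != p, (s = t \/ s = 1 - t) &
   arc e t = ((1 - s) * INR (aI p) + s * INR (aI c),
              (1 - s) * INR (bI p) + s * INR (bI c))].
Proof.
move=> eT; have J := joins_ends12 e.
have ne := joins_neq (@noloop) J.
rewrite /arc (wb_tree eT) /pos /=.
case/orP: (le_orient eT J) => H.
- exists (ends e).1, (ends e).2, (1 - t); split => //; first by right.
  congr pair; ring.
- exists (ends e).2, (ends e).1, t; split => //; first by rewrite joinsC.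
  + by rewrite eq_sym.
  + by left.
  + congr pair; ring.
Qed.

Lemma kinds e : [\/ e \in ET, exists2 i : 'I_n.+1, (i.+1 < n)%N & e = g i,
  e = g (inord n.-1) | e = g ord_max].
Proof.
case/orP: (HEall e) => [eT|]; first by apply: Or41.
rewrite HEC => /imsetP [i _ ->].
have := ltn_ord i; rewrite ltnS leq_eqVlt => /orP [/eqP Ei|Hi].
  by apply: Or44; congr g; apply: val_inj.
case: (ltngtP i.+1 n) => H.
- by apply: Or42; exists i.
- by move: Hi H; clear; lia.
- by apply: Or43; congr g; apply: ord_inj; rewrite inord_nm1; move: H; clear; lia.
Qed.

Lemma n_ge2 : 2 <= INR n.
Proof. have := leN_INR Hn; by rewrite (_ : INR 2 = 2) //; simpl; ring. Qed.

Lemma bn_r v : bI v = n -> v = r.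
Proof.
move=> E0; apply: rD; rewrite Hr -IP E0 leqnn andbT.
by have := aI_le_bI v; rewrite E0.
Qed.

Lemma tree_pt e t : e \in ET -> 0 < t -> t < 1 -> exists c p s,
  [/\ joins ends e c p, le c p, c != p, 0 < s /\ s < 1 &
   arc e t = ((1 - s) * INR (aI p) + s * INR (aI c),
              (1 - s) * INR (bI p) + s * INR (bI c))].
Proof.
move=> eT t0 t1; have [c [p [s [J Hcp cp Hs Ea]]]] := nf_tree t eT.
by exists c, p, s; split => //; apply: s01 Hs t0 t1.
Qed.

Lemma tree_bounds c p s : le c p -> 0 < s -> s < 1 ->
  let L := (1 - s) * INR (aI p) + s * INR (aI c) in
  let R := (1 - s) * INR (bI p) + s * INR (bI c) in
  [/\ INR (aI p) <= L, L <= INR (aI c), INR (bI c) <= R & R <= INR (bI p)].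
Proof.
move=> H s0 s1 /=; have [ha hb] := le_interval H.
have [l1 l2] := RL_betw (leN_INR ha) (Rlt_le _ _ s0) (Rlt_le _ _ s1).
have [l3 l4] := RL_betw2 (leN_INR hb) (Rlt_le _ _ s0) (Rlt_le _ _ s1).
by split.
Qed.

Lemma vav e t v : 0 < t -> t < 1 -> arc e t <> pos v.
Proof.
move=> t0 t1 E0.
have aR := pos_INR (aI v).
case: (kinds e) => [eT|[i Hi Ei]| Ei | Ei]; rewrite ?Ei in E0.
- have [c [p [s [J Hcp cp [s0 s1] Ea]]]] := tree_pt eT t0 t1.
  rewrite Ea /pos in E0; case: E0 => EL ER.
  have [la1 la2 lb1 lb2] := tree_bounds Hcp s0 s1.
  rewrite EL ER in la1 la2 lb1 lb2.
  have Hcv : le c v := interval_le (INR_leN la2) (INR_leN lb1).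
  have Hvp : le v p := interval_le (INR_leN la1) (INR_leN lb2).
  case: (le_cover eT J Hcv Hvp) => Ev; subst v.
  + have A := INR_eqN (RL_end1 s1 EL); have B := INR_eqN (RL_end1 s1 ER).
    by move: cp; rewrite (interval_inj A B) eqxx.
  + have A := INR_eqN (RL_end0 s0 EL); have B := INR_eqN (RL_end0 s0 ER).
    by move: cp; rewrite (interval_inj A B) eqxx.
- have [s [Hs Ea]] := nf_line t Hi; have [s0 s1] := s01 Hs t0 t1.
  rewrite Ea /pos in E0; case: E0 => EL ER.
  by apply: (@INR_betw_int i (aI v)); lra.
- have [s [Hs Ea]] := nf_a2 t; have [s0 s1] := s01 Hs t0 t1.
  rewrite Ea /pos in E0; case: E0 => EL ER.
  have H1 : INR n - 1 < INR (bI v) by rewrite -ER; nra.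
  have H2 := INR_gt_pred H1.
  have Eb : bI v = n by apply/eqP; rewrite eqn_leq bI_le_n H2.
  have Ev := bn_r Eb; subst v.
  have [ha _] := r_interval; rewrite ha /= in EL.
  have := n_ge2; nra.
- have [s [Hs Ea]] := nf_a1 t; have [s0 s1] := s01 Hs t0 t1.
  rewrite Ea /pos in E0; case: E0 => EL ER.
  nra.
Qed.

Lemma disj_int c1 c2 e1 e2 p : e1 \in ET -> e2 \in ET -> joins ends e1 c1 p ->
  joins ends e2 c2 p -> le c1 p -> le c2 p -> c2 != p -> c1 != c2 ->
  (bI c1 < aI c2)%N \/ (bI c2 < aI c1)%N.
Proof.
move=> e1T e2T J1 J2 H1 H2 n2 d.
case: (ltnP (bI c1) (aI c2)) => h1; first by left.
case: (ltnP (bI c2) (aI c1)) => h2; first by right.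
exfalso.
set k := maxn (aI c1) (aI c2).
have kn : (k < n.+1)%N.
  rewrite ltnS; apply: leq_trans (bI_le_n c1); rewrite geq_max aI_le_bI //.
have k1 : f (inord k) \in D c1.
  rewrite -IP inordK // leq_maxl /= geq_max aI_le_bI //.
have k2 : f (inord k) \in D c2.
  rewrite -IP inordK // leq_maxr /= geq_max h2 aI_le_bI //.
move: k1 k2; rewrite !inE => /andP [_ K1] /andP [_ K2].
by move: d; rewrite (sibling e1T e2T J1 J2 H1 H2 n2 K1 K2) eqxx.
Qed.

Lemma TT_aux e1 e2 c1 p1 c2 p2 s1 s2 : e1 \in ET -> e2 \in ET -> e1 != e2 ->
  joins ends e1 c1 p1 -> joins ends e2 c2 p2 -> le c1 p1 -> le c2 p2 ->
  c1 != p1 -> c2 != p2 -> 0 < s1 -> s1 < 1 -> 0 < s2 -> s2 < 1 ->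
  (1 - s1) * INR (aI p1) + s1 * INR (aI c1) = (1 - s2) * INR (aI p2) + s2 * INR (aI c2) ->
  (1 - s1) * INR (bI p1) + s1 * INR (bI c1) = (1 - s2) * INR (bI p2) + s2 * INR (bI c2) ->
  le p1 p2 -> False.
Proof.
move=> e1T e2T ne J1 J2 H1 H2 n1 n2 s10 s11 s20 s21 EL ER H12.
have [a1 a2 b1 b2] := tree_bounds H1 s10 s11.
have [a3 a4 b3 b4] := tree_bounds H2 s20 s21.
simpl in a1, a2, b1, b2, a3, a4, b3, b4.
have Hc2p1 : le c2 p1.
  apply: interval_le; apply: INR_leN; lra.
case: (le_cover e2T J2 Hc2p1 H12) => Ep.
- subst p1.
  have LA : (1 - s1) * INR (aI c2) + s1 * INR (aI c1) = INR (aI c2) by lra.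
  have RA : (1 - s1) * INR (bI c2) + s1 * INR (bI c1) = INR (bI c2) by lra.
  have A := INR_eqN (RL_end0 s10 LA); have B := INR_eqN (RL_end0 s10 RA).
  by move: n1; rewrite (interval_inj A B) eqxx.
- subst p2.
  case: (c1 =P c2) => [Ec|/eqP d].
    subst c2; by move: ne; rewrite (noparallel e1T e2T J1 J2) eqxx.
  have [ha1 hb1] := le_interval H1; have [ha2 hb2] := le_interval H2.
  have o1 := aI_le_bI c1; have o2 := aI_le_bI c2.
  case: (disj_int e1T e2T J1 J2 H1 H2 n2 d) => h.
  + apply: (RL_sib (leN_INR ha1) (leN_INR o1) _ (leN_INR o2) (leN_INR hb2)
      s10 s11 s20 s21 EL ER).
    by apply: lt_INR; apply/ltP.
  + apply: (RL_sib (leN_INR ha2) (leN_INR o2) _ (leN_INR o1) (leN_INR hb1)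
      s20 s21 s10 s11 (esym EL) (esym ER)).
    by apply: lt_INR; apply/ltP.
Qed.

Lemma TT e1 e2 t1 t2 : e1 \in ET -> e2 \in ET -> 0 < t1 -> t1 < 1 ->
  0 < t2 -> t2 < 1 -> arc e1 t1 = arc e2 t2 -> e1 = e2.
Proof.
move=> e1T e2T t10 t11 t20 t21 E0.
case: (e1 =P e2) => // /eqP ne; exfalso.
have [c1 [p1 [s1 [J1 H1 n1 [s10 s11] Ea1]]]] := tree_pt e1T t10 t11.
have [c2 [p2 [s2 [J2 H2 n2 [s20 s21] Ea2]]]] := tree_pt e2T t20 t21.
rewrite Ea1 Ea2 in E0; case: E0 => EL ER.
have [a1 a2 b1 b2] := tree_bounds H1 s10 s11.
have [a3 a4 b3 b4] := tree_bounds H2 s20 s21.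
simpl in a1, a2, b1, b2, a3, a4, b3, b4.
have Hc1p2 : le c1 p2 by apply: interval_le; apply: INR_leN; lra.
case/orP: (le_chain H1 Hc1p2) => H.
- exact: (TT_aux e1T e2T ne J1 J2 H1 H2 n1 n2 s10 s11 s20 s21 EL ER H).
- by apply: (TT_aux e2T e1T _ J2 J1 H2 H1 n2 n1 s20 s21 s10 s11 (esym EL) (esym ER) H);
    rewrite eq_sym.
Qed.

Lemma pt e t : 0 < t -> t < 1 -> [\/ e \in ET,
  exists (i : 'I_n.+1) s, [/\ (i.+1 < n)%N, e = g i, 0 < s /\ s < 1 &
               arc e t = (INR i + s, INR i + s)],
  exists s, [/\ e = g (inord n.-1), 0 < s /\ s < 1 &
     arc e t = (s * (INR n - 1) + s * (1 - s), INR n - s + s * (1 - s))] |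
  exists s, [/\ e = g ord_max, 0 < s /\ s < 1 &
     arc e t = (- (s * (1 - s)), (1 - s) * INR n - s * (1 - s))]].
Proof.
move=> t0 t1; case: (kinds e) => [eT|[i Hi Ei]|Ei|Ei]; first by apply: Or41.
- apply: Or42; have [s [Hs Ea]] := nf_line t Hi.
  by exists i, s; rewrite Ei; split => //; apply: s01 Hs t0 t1.
- apply: Or43; have [s [Hs Ea]] := nf_a2 t.
  by exists s; rewrite Ei; split => //; apply: s01 Hs t0 t1.
- apply: Or44; have [s [Hs Ea]] := nf_a1 t.
  by exists s; rewrite Ei; split => //; apply: s01 Hs t0 t1.
Qed.

Lemma TL e t (i : nat) x : e \in ET -> 0 < t -> t < 1 -> INR i < x -> x < INR i + 1 ->
  arc e t = (x, x) -> False.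
Proof.
move=> eT t0 t1 h1 h2 E0.
have [c [p [s [J H np [s0 s1] Ea]]]] := tree_pt eT t0 t1.
rewrite Ea in E0; case: E0 => EL ER.
have [a1 a2 b1 b2] := tree_bounds H s0 s1; simpl in a1, a2, b1, b2.
have o := leN_INR (aI_le_bI c).
have Ex : x = INR (aI c) by lra.
apply: (@INR_betw_int i (aI c)); lra.
Qed.

Lemma TA2 e t s : e \in ET -> 0 < t -> t < 1 -> 0 < s -> s < 1 ->
  arc e t = (s * (INR n - 1) + s * (1 - s), INR n - s + s * (1 - s)) -> False.
Proof.
move=> eT t0 t1 s0 s1 E0.
have [c [p [s' [J H np [s0' s1'] Ea]]]] := tree_pt eT t0 t1.
rewrite Ea in E0; case: E0 => EL ER.
have [a1 a2 b1 b2] := tree_bounds H s0' s1'; simpl in a1, a2, b1, b2.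
have H1 : INR n - 1 < INR (bI p) by nra.
have Eb : bI p = n by apply/eqP; rewrite eqn_leq bI_le_n (INR_gt_pred H1).
have Ep := bn_r Eb; subst p.
have cr : c != r by [].
have A0 := rchild_a0 eT J cr.
rewrite A0 /= in a2 EL.
have := pos_INR (aI r); have := n_ge2; nra.
Qed.

Lemma TA1 e t s : e \in ET -> 0 < t -> t < 1 -> 0 < s -> s < 1 ->
  arc e t = (- (s * (1 - s)), (1 - s) * INR n - s * (1 - s)) -> False.
Proof.
move=> eT t0 t1 s0 s1 E0.
have [c [p [s' [J H np [s0' s1'] Ea]]]] := tree_pt eT t0 t1.
rewrite Ea in E0; case: E0 => EL ER.
have [a1 a2 b1 b2] := tree_bounds H s0' s1'; simpl in a1, a2, b1, b2.
have := pos_INR (aI p); nra.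
Qed.

Lemma cross e e' t t' : 0 < t -> t < 1 -> 0 < t' -> t' < 1 ->
  arc e t = arc e' t' -> e = e'.
Proof.
move=> t0 t1 t0' t1' E0.
have ng := n_ge2.
case: (pt e t0 t1) => [eT|[i [s [Hi Ei [s0 s1] Ea]]]|[s [Ei [s0 s1] Ea]]|[s [Ei [s0 s1] Ea]]];
case: (pt e' t0' t1') => [eT'|[j [s' [Hj Ej [s0' s1'] Ea']]]|[s' [Ej [s0' s1'] Ea']]|[s' [Ej [s0' s1'] Ea']]].
- exact: TT eT eT' t0 t1 t0' t1' E0.
- exfalso; rewrite Ea' in E0; apply: (TL (i := j) eT t0 t1 _ _ E0); lra.
- exfalso; rewrite Ea' in E0; exact: (TA2 eT t0 t1 s0' s1' E0).
- exfalso; rewrite Ea' in E0; exact: (TA1 eT t0 t1 s0' s1' E0).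
- exfalso; rewrite Ea in E0; apply: (TL (i := i) eT' t0' t1' _ _ (esym E0)); lra.
- rewrite Ea Ea' in E0; case: E0 => EL _.
  have hij : i = j :> nat.
    have A1 : INR i < INR j + 1 by lra.
    have A2 : INR j < INR i + 1 by lra.
    rewrite -S_INR in A1; rewrite -S_INR in A2.
    have := INR_lt _ _ A1; have := INR_lt _ _ A2; lia.
  by rewrite Ei Ej; congr g; apply: val_inj.
- exfalso; rewrite Ea Ea' in E0; case: E0 => EL ER; nra.
- exfalso; rewrite Ea Ea' in E0; case: E0 => EL ER; nra.
- exfalso; rewrite Ea in E0; exact: (TA2 eT' t0' t1' s0 s1 (esym E0)).
- exfalso; rewrite Ea Ea' in E0; case: E0 => EL ER; nra.
- by rewrite Ei Ej.
- exfalso; rewrite Ea Ea' in E0; case: E0 => EL ER; nra.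
- exfalso; rewrite Ea in E0; exact: (TA1 eT' t0' t1' s0 s1 (esym E0)).
- exfalso; rewrite Ea Ea' in E0; case: E0 => EL ER; nra.
- exfalso; rewrite Ea Ea' in E0; case: E0 => EL ER; nra.
- by rewrite Ei Ej.
Qed.

Lemma pos_inj : injective pos.
Proof.
move=> u v; rewrite /pos => -[A B].
by apply: interval_inj; apply: INR_eqN.
Qed.

Lemma wb_line (i : 'I_n.+1) : (i.+1 < n)%N -> wb (g i) = 0.
Proof.
move=> H; rewrite /wb; case: eqP => [/ginj E'|_]; first by move: H; rewrite E' /=; lia.
case: eqP => [/ginj E'|//]; move: H; rewrite E' inord_nm1; lia.
Qed.

Lemma key_e e : (wb e = 0 /\ pos (ends e).1 <> pos (ends e).2) \/
  ((pos (ends e).2).2 - (pos (ends e).2).1 <> (pos (ends e).1).2 - (pos (ends e).1).1).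
Proof.
have pd : pos (ends e).1 <> pos (ends e).2 by move/pos_inj; apply: (@noloop e).
case: (kinds e) => [eT|[i Hi Ei]|Ei|Ei].
- by left; split => //; rewrite wb_tree.
- by left; split => //; rewrite Ei wb_line.
- right; rewrite Ei.
  have pr : (pos r).2 - (pos r).1 = INR n by rewrite pos_r /=; ring.
  have pl : (pos (f (inord n.-1))).2 - (pos (f (inord n.-1))).1 = 0.
    rewrite pos_leaf /=; first ring.
    rewrite inord_nm1; move: Hn; clear; lia.
  have oS : ordS (inord n.-1 : 'I_n.+1) = ord_max.
    have h0 : (0 < n)%N by move: Hn; clear; lia.
    by apply: val_inj; rewrite /= inord_nm1 (prednK h0) modn_small.
  have ng := n_ge2.
  case: (ends_g (inord n.-1)) => [[-> ->]|[-> ->]]; rewrite oS -Hr pr pl; lra.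
- right; rewrite Ei.
  have pr : (pos r).2 - (pos r).1 = INR n by rewrite pos_r /=; ring.
  have pl : (pos (f ord0)).2 - (pos (f ord0)).1 = 0.
    by rewrite pos_leaf /=; [ring | move: Hn; clear; lia].
  have oS : ordS (ord_max : 'I_n.+1) = ord0 by apply: val_inj; rewrite /= modnn.
  have ng := n_ge2.
  case: (ends_g ord_max) => [[-> ->]|[-> ->]]; rewrite oS -Hr pr pl; lra.
Qed.

Lemma self_inj e t t' : arc e t = arc e t' -> t = t'.
Proof.
rewrite /arc; move: (key_e e).
move: (pos (ends e).1) (pos (ends e).2) (wb e) => [a b] [c d] w /= K [E1 E2].
case: (Req_dec t t') => // ne; exfalso.
have N : t - t' <> 0 by lra.
have F1 : (t - t') * (c - a + w * (1 - t - t')) = 0 by lra.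
have F2 : (t - t') * (d - b + w * (1 - t - t')) = 0 by lra.
case/Rmult_integral: F1 => // F1; case/Rmult_integral: F2 => // F2.
case: K => [[w0 pd]|K].
  by apply: pd; subst w; congr pair; lra.
by apply: K; lra.
Qed.

Lemma arc_planar : planar ends.
Proof.
exists pos, arc; split.
- exact: pos_inj.
- move=> e; split.
  + rewrite /arc; apply: (@cont_quad _ (pos (ends e).1).1 ((pos (ends e).2).1 - (pos (ends e).1).1)
      (wb e) (pos (ends e).1).2 ((pos (ends e).2).2 - (pos (ends e).1).2) (wb e)) => s.
    congr pair; ring.
  + by rewrite /arc; move: (pos _) (pos _) => [a b] [c d] /=; congr pair; ring.
  + by rewrite /arc; move: (pos _) (pos _) => [a b] [c d] /=; congr pair; ring.
- move=> e e' t t' t0 t1 t0' t1' E0.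
  have endp : forall x, arc e' x = pos (ends e').1 \/ arc e' x = pos (ends e').2 ->
      arc e t = arc e' x -> False.
    move=> x [] Ex E1.
      by apply: (@vav e t (ends e').1 t0 t1); rewrite E1 Ex.
    by apply: (@vav e t (ends e').2 t0 t1); rewrite E1 Ex.
  case: (Rle_lt_or_eq_dec _ _ t0') => [h0|h0]; last first.
    exfalso; subst t'; apply: (endp R0) E0; left.
    by rewrite /arc; move: (pos _) (pos _) => [a b] [c d] /=; congr pair; ring.
  case: (Rle_lt_or_eq_dec _ _ t1') => [h1|h1]; last first.
    exfalso; subst t'; apply: (endp R1) E0; right.
    by rewrite /arc; move: (pos _) (pos _) => [a b] [c d] /=; congr pair; ring.
  have Ee := cross t0 t1 h0 h1 E0; subst e'.
  by split => //; exact: (self_inj E0).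
- move=> e v t t0 t1; exact: (@vav e t v t0 t1).
Qed.

Lemma inc_g i x : incident ends (g i) x = (x == f i) || (x == f (ordS i)).
Proof.
rewrite /incident; case: (ends_g i) => [[-> ->]|[-> ->]];
  by rewrite ?(eq_sym (f i)) ?(eq_sym (f (ordS i))) // orbC.
Qed.

Lemma EC_inc_leaf (j : 'I_n.+1) :
  [set e in EC | incident ends e (f j)] = [set g j; g (ord_pred j)].
Proof.
apply/setP => e; rewrite !inE; apply/andP/orP.
- case; rewrite HEC => /imsetP [i _ ->]; rewrite inc_g => /orP [] /eqP /finj Ei.
    by left; rewrite Ei.
  by right; rewrite Ei ordSK.
- case => /eqP ->; split; rewrite ?HEC ?imset_f // inc_g.
    by rewrite eqxx.
  by rewrite ord_predK eqxx orbT.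
Qed.

Lemma g_ne_pred (j : 'I_n.+1) : g j != g (ord_pred j).
Proof.
apply/negP => /eqP /ginj E0.
have : ordS j = j by rewrite {1}E0 ord_predK.
move/(congr1 val) => /=.
have := ltn_ord j; rewrite ltnS leq_eqVlt => /orP [/eqP ->|H].
  rewrite modnn; move: Hn; clear; lia.
rewrite modn_small //; lia.
Qed.

Lemma EC_inc_nonleaf v : v \notin Lv -> [set e in EC | incident ends e v] = set0.
Proof.
move=> vL; apply/setP => e; rewrite !inE; apply/negP => /andP [].
rewrite HEC => /imsetP [i _ ->]; rewrite inc_g => /orP [] /eqP Ev;
  by move: vL; rewrite Ev f_Lv.
Qed.

Lemma deg_all v : deg ends [set: E] v = 3%N.
Proof.
rewrite /deg.
have -> : [set e in [set: E] | incident ends e v] =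
   [set e in ET | incident ends e v] :|: [set e in EC | incident ends e v].
  apply/setP => e; rewrite !inE; case: (incident ends e v); rewrite ?andbT ?andbF //.
  by move: (HEall e) => ->.
rewrite cardsU.
have -> : [set e in ET | incident ends e v] :&: [set e in EC | incident ends e v] = set0.
  apply/setP => e; rewrite !inE; case: sct => _ H _ _.
  apply/negP => /andP [/andP [eT _] /andP [eC _]].
  have X : e \in ET :&: EC by rewrite inE eT eC.
  by move: X; rewrite H inE.
rewrite cards0 subn0.
case: (boolP (v \in Lv)) => vL.
  have := vL; rewrite /Lv /leaves inE => /andP [_ /eqP d1].
  rewrite -/(deg ends ET v) d1 -(Lv_f vL) EC_inc_leaf cards2 g_ne_pred //.
have vr : v != r by apply: contraNneq vL => ->.
by rewrite -/(deg ends ET v) (deg_internal vL vr) EC_inc_nonleaf // cards0.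
Qed.
End Tree.

(* The ambient multigraph (V, E, ends) is T ∪ C. *)
Theorem lemma5p3 (V E : finType) (ends : E -> V * V) (l : E -> R)
  (VT : {set V}) (ET : {set E}) (VC : {set V}) (EC : {set E}) :
  (forall e, (ends e).1 <> (ends e).2) ->
  (forall e, Rlt R0 (l e)) ->
  (forall v, (v \in VT) || (v \in VC)) ->
  (forall e, (e \in ET) || (e \in EC)) ->
  is_tree ends VT ET ->
  is_cycle ends VC EC ->
  shortcut_tree ends l VT ET VC EC ->
  VC = leaves ends VT ET ->
  3 <= #|leaves ends VT ET| ->
  (forall v, v \in VT -> deg ends ET v <> 2) ->
  planar ends /\ (forall v, deg ends [set: E] v = 3).
Proof.
move=> noloop lpos Hcov HEall tree cyc sct HVCL h3 nondeg2.
have HVT : forall v, v \in VT.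
  move=> v; case/orP: (Hcov v) => // vC; rewrite HVCL in vC.
  by move: vC; rewrite /leaves inE => /andP [].
case: cyc => k [f [g [[Hk finj ginj Hfg] [HVC HEC]]]].
case: k f g Hk finj ginj Hfg HVC HEC => [//|n] f g Hk finj ginj Hfg HVC HEC.
have Hn : 1 < n.
  by move: h3; rewrite -HVCL HVC card_imset // card_ord.
have rleaf : f ord_max \in leaves ends VT ET by rewrite -HVCL HVC imset_f.
split.
- exact: (arc_planar noloop HVT tree rleaf nondeg2 Hn finj ginj Hfg HVC HEC HVCL
    erefl lpos sct HEall).
- move=> v; exact: (deg_all noloop HVT tree rleaf nondeg2 Hn finj ginj Hfg HVC HEC
    HVCL erefl lpos sct HEall v).
Qed.
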